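(* A developable Möbius band exists. Precisely: there exist real numbers $l>0$ and $b>0$ and a continuous injective map $\Phi$ from the Möbius strip $M_{l,b}$ into $\mathbb{R}^3$ with the following properties. The restriction of $\Phi$ to the interior of the rectangle $[0,l]\times[-b,b]$ is a piecewise smooth isometric immersion, so that it realizes the band purely by bending, without stretching. The image $\Phi(M_{l,b})$ is a one-sided (Möbius) surface made up of finitely many pieces of planes and pieces of circular cylinders, namely three planar pieces and three pieces of circular cylinders, and it is therefore developable.
   Context: For $l>0$ and $b>0$, the Möbius strip $M_{l,b}$ is the quotient of the rectangle $[0,l]\times[-b,b]$ by the identification $(0,t)\sim(l,-t)$ for $t\in[-b,b]$. This gluing joins the two short ends of the rectangle with a half-twist. A map of the rectangle into $\mathbb{R}^3$ is an isometric immersion, or a deformation ''without stretching'', if it preserves the lengths of all curves in the rectangle. A surface in $\mathbb{R}^3$ is developable if it is locally isometric to a plane, that is, its Gaussian curvature vanishes wherever it is smooth. Pieces of planes and of circular cylinders have this property. *)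

(* Defs.v *)
From Stdlib Require Import Reals List.
From Coquelicot Require Import Coquelicot.
Open Scope R_scope.

Definition R2 : Type := (R * R)%type.
Definition R3 : Type := (R * R * R)%type.

Definition dist2 (p q : R2) : R :=
  sqrt ((fst p - fst q) ^ 2 + (snd p - snd q) ^ 2).

Definition c1 (v : R3) : R := fst (fst v).
Definition c2 (v : R3) : R := snd (fst v).
Definition c3 (v : R3) : R := snd v.

Definition dot3 (v w : R3) : R := c1 v * c1 w + c2 v * c2 w + c3 v * c3 w.
Definition sub3 (v w : R3) : R3 := ((c1 v - c1 w, c2 v - c2 w), c3 v - c3 w).
Definition zero3 : R3 := ((0, 0), 0).
Definition dist3 (v w : R3) : R := sqrt (dot3 (sub3 v w) (sub3 v w)).

(* The plane { x | n . x = c } (with n <> 0 required where used). *)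
Definition plane (n : R3) (c : R) (x : R3) : Prop := dot3 n x = c.

(* The circular cylinder of radius r around the line through a with
   direction u (u <> 0, r > 0 required where used): points at distance r
   from the axis. *)
Definition cylinder (a u : R3) (r : R) (x : R3) : Prop :=
  let w := sub3 x a in
  dot3 w w - (dot3 w u) ^ 2 / dot3 u u = r ^ 2.

Definition same_set {A : Type} (S T : A -> Prop) : Prop :=
  forall x, S x <-> T x.

Definition rect (l b : R) (p : R2) : Prop :=
  0 <= fst p <= l /\ - b <= snd p <= b.

Definition open_rect (l b : R) (p : R2) : Prop :=
  0 < fst p < l /\ - b < snd p < b.

Definition mob_rel (l : R) (p q : R2) : Prop :=
  p = q
  \/ (fst p = 0 /\ fst q = l /\ snd q = - snd p)
  \/ (fst q = 0 /\ fst p = l /\ snd p = - snd q).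

Definition mobius_compatible (l b : R) (Phi : R2 -> R3) : Prop :=
  forall t, - b <= t <= b -> Phi (0, t) = Phi (l, - t).

Definition mobius_injective (l b : R) (Phi : R2 -> R3) : Prop :=
  forall p q, rect l b p -> rect l b q -> Phi p = Phi q -> mob_rel l p q.

(* Continuity of Phi on a set S (relative topology).  For S the rectangle
   this is continuity of the induced map on the quotient M_{l,b}. *)
Definition continuous_on_set (S : R2 -> Prop) (Phi : R2 -> R3) : Prop :=
  forall p, S p -> forall eps, 0 < eps -> exists delta, 0 < delta /\
    forall q, S q -> dist2 q p < delta -> dist3 (Phi q) (Phi p) < eps.

Definition interior2 (D : R2 -> Prop) (p : R2) : Prop :=
  exists r, 0 < r /\ forall q, dist2 q p < r -> D q.

Definition nonempty_interior (D : R2 -> Prop) : Prop :=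
  exists p, interior2 D p.

Definition in_closure_of_interior (D : R2 -> Prop) (p : R2) : Prop :=
  forall eps, 0 < eps -> exists q, interior2 D q /\ dist2 q p < eps.

Inductive pdir := PX | PY.

Definition pderiv (d : pdir) (f : R -> R -> R) : R -> R -> R :=
  match d with
  | PX => fun x y => Derive (fun t => f t y) x
  | PY => fun x y => Derive (fun t => f x t) y
  end.

Fixpoint ipderiv (ds : list pdir) (f : R -> R -> R) : R -> R -> R :=
  match ds with
  | nil => f
  | d :: ds' => pderiv d (ipderiv ds' f)
  end.

Definition continuous2_at (g : R -> R -> R) (x y : R) : Prop :=
  forall eps, 0 < eps -> exists delta, 0 < delta /\
    forall x' y', Rabs (x' - x) < delta -> Rabs (y' - y) < delta ->
      Rabs (g x' y' - g x y) < eps.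

Definition smooth_on (U : R2 -> Prop) (f : R -> R -> R) : Prop :=
  forall ds x y, U (x, y) ->
    ex_derive (fun t => ipderiv ds f t y) x /\
    ex_derive (fun t => ipderiv ds f x t) y /\
    continuous2_at (ipderiv ds f) x y.

Definition smooth_map_on (U : R2 -> Prop) (Phi : R2 -> R3) : Prop :=
  smooth_on U (fun x y => c1 (Phi (x, y))) /\
  smooth_on U (fun x y => c2 (Phi (x, y))) /\
  smooth_on U (fun x y => c3 (Phi (x, y))).

Definition piecewise_smooth_on (O : R2 -> Prop) (Phi : R2 -> R3) : Prop :=
  exists Ds : list (R2 -> Prop),
    (forall p, O p -> exists D, In D Ds /\ D p) /\
    (forall D, In D Ds ->
       (forall p, D p -> O p) /\
       (forall p, D p -> in_closure_of_interior D p) /\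
       smooth_map_on (interior2 D) Phi).

(* t0 < t1 < ... < tn = b, given a = t0 and the list [t1; ...; tn] *)
Fixpoint is_partition (a b : R) (ts : list R) : Prop :=
  match ts with
  | nil => a = b
  | t :: ts' => a < t /\ is_partition t b ts'
  end.

Fixpoint poly_len {A : Type} (d : A -> A -> R) (g : R -> A) (t0 : R)
    (ts : list R) : R :=
  match ts with
  | nil => 0
  | t :: ts' => d (g t0) (g t) + poly_len d g t ts'
  end.

Definition curve_length {A : Type} (d : A -> A -> R) (g : R -> A) (a b : R)
    : Rbar :=
  Lub_Rbar (fun s => exists ts, is_partition a b ts /\ s = poly_len d g a ts).

Definition continuous_curve_on (g : R -> R2) (a b : R) : Prop :=
  forall s, a <= s <= b -> forall eps, 0 < eps -> exists delta, 0 < delta /\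
    forall s', a <= s' <= b -> Rabs (s' - s) < delta -> dist2 (g s') (g s) < eps.

Definition length_preserving_on (O : R2 -> Prop) (Phi : R2 -> R3) : Prop :=
  forall (g : R -> R2) (a b : R), a <= b ->
    continuous_curve_on g a b ->
    (forall s, a <= s <= b -> O (g s)) ->
    curve_length dist3 (fun s => Phi (g s)) a b = curve_length dist2 g a b.

Definition three_planes_three_cylinders (l b : R) (Phi : R2 -> R3) : Prop :=
  exists (E : nat -> R2 -> Prop)
         (n : nat -> R3) (c : nat -> R)
         (a u : nat -> R3) (r : nat -> R),
    (forall p, rect l b p -> exists i, (i < 6)%nat /\ E i p) /\
    (forall i, (i < 6)%nat -> (forall p, E i p -> rect l b p) /\
                              nonempty_interior (E i)) /\
    (forall i j, (i < j < 6)%nat -> forall p, interior2 (E i) p ->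
                                     interior2 (E j) p -> False) /\
    (forall i, (i < 3)%nat ->
       n i <> zero3 /\ (forall p, E i p -> plane (n i) (c i) (Phi p))) /\
    (forall i, (i < 3)%nat ->
       u i <> zero3 /\ 0 < r i /\
       (forall p, E (3 + i)%nat p -> cylinder (a i) (u i) (r i) (Phi p))) /\
    (forall i j, (i < j < 3)%nat ->
       ~ same_set (plane (n i) (c i)) (plane (n j) (c j))) /\
    (forall i j, (i < j < 3)%nat ->
       ~ same_set (cylinder (a i) (u i) (r i)) (cylinder (a j) (u j) (r j))).

(* Main.v *)
Require Import Defs.
From Stdlib Require Import Reals Lra Psatz List Lia.
From Coquelicot Require Import Coquelicot.
Open Scope R_scope.
Set Bullet Behavior "Strict Subproofs".

Lemma PI_gt3 : 3 < PI.
Proof. pose proof PI2_3_2. lra. Qed.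
Lemma PI_le4 : PI <= 4.
Proof. exact PI_4. Qed.

Definition cl (r s : R) : R := Rmin (Rmax s 0) (PI * r).
Definition Mx (r s : R) : R := Rmax (s - PI * r) 0.
Definition hh (r s : R) : R := - (cl r s + 2 * Mx r s) + r * sin (cl r s / r).
Definition vv (r s : R) : R := r * (1 - cos (cl r s / r)).
Definition dh (r s : R) : R := cos (cl r s / r) - 1.
Definition dv (r s : R) : R := sin (cl r s / r).

Lemma cl_neg r s : 0 < r -> s <= 0 -> cl r s = 0.
Proof. intros Hr Hs. unfold cl. pose proof PI_gt3.
  rewrite Rmax_right by lra. rewrite Rmin_left; nra. Qed.
Lemma cl_mid r s : 0 < r -> 0 <= s <= PI * r -> cl r s = s.
Proof. intros Hr Hs. unfold cl. rewrite Rmax_left by lra. rewrite Rmin_left; lra. Qed.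
Lemma cl_big r s : 0 < r -> PI * r <= s -> cl r s = PI * r.
Proof. intros Hr Hs. unfold cl. pose proof PI_gt3.
  rewrite Rmax_left by nra. rewrite Rmin_right; lra. Qed.
Lemma Mx_small r s : s <= PI * r -> Mx r s = 0.
Proof. intros Hs. unfold Mx. rewrite Rmax_right; lra. Qed.
Lemma Mx_big r s : PI * r <= s -> Mx r s = s - PI * r.
Proof. intros Hs. unfold Mx. rewrite Rmax_left; lra. Qed.

Lemma cl_range r s : 0 < r -> 0 <= cl r s <= PI * r.
Proof. intros Hr. pose proof PI_gt3. unfold cl.
  destruct (Rle_dec s 0).
  - rewrite Rmax_right by lra. rewrite Rmin_left; nra.
  - rewrite Rmax_left by lra. destruct (Rle_dec s (PI*r)).
    + rewrite Rmin_left; lra.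
    + rewrite Rmin_right; nra. Qed.

Lemma cl_lip r s t : 0 < r -> Rabs (cl r s - cl r t) <= Rabs (s - t).
Proof. intros Hr. pose proof PI_gt3. assert (0 < PI * r) by nra.
  destruct (Rle_dec s 0); destruct (Rle_dec t 0);
  destruct (Rle_dec s (PI*r)); destruct (Rle_dec t (PI*r));
  repeat first [ rewrite (cl_neg r s) by lra | rewrite (cl_neg r t) by lra
         | rewrite (cl_mid r s) by lra | rewrite (cl_mid r t) by lra
         | rewrite (cl_big r s) by lra | rewrite (cl_big r t) by lra ];
  unfold Rabs; repeat destruct Rcase_abs; lra. Qed.

Lemma sin_abs_le x : Rabs (sin x) <= Rabs x.
Proof. pose proof (SIN_bound x). pose proof PI_gt3.
  destruct (Rle_dec 1 (Rabs x)).
  - unfold Rabs in *; repeat destruct Rcase_abs; lra.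
  - destruct (Rtotal_order x 0) as [H1|[H1|H1]].
    + pose proof (sin_lt_x (-x) ltac:(lra)). rewrite sin_neg in H2.
      assert (0 <= sin (-x)) by (apply sin_ge_0; unfold Rabs in n; destruct Rcase_abs; lra).
      rewrite sin_neg in H3.
      unfold Rabs in *; repeat destruct Rcase_abs; lra.
    + subst. rewrite sin_0. rewrite Rabs_R0. lra.
    + pose proof (sin_lt_x x H1).
      assert (0 <= sin x) by (apply sin_ge_0; unfold Rabs in n; destruct Rcase_abs; lra).
      unfold Rabs in *; repeat destruct Rcase_abs; lra.
Qed.

Lemma cos_lip a b : Rabs (cos a - cos b) <= Rabs (a - b).
Proof. rewrite form2. pose proof (sin_abs_le ((a-b)/2)). pose proof (SIN_bound ((a+b)/2)).
  rewrite !Rabs_mult. assert (Rabs (sin ((a + b) / 2)) <= 1) by (unfold Rabs; destruct Rcase_abs; lra).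
  assert (Rabs ((a-b)/2) = Rabs (a-b) / 2) by (unfold Rabs; repeat destruct Rcase_abs; lra).
  assert (Hm2 : Rabs (-2) = 2) by (unfold Rabs; destruct Rcase_abs; lra). rewrite Hm2.
  pose proof (Rabs_pos (sin ((a - b) / 2))). pose proof (Rabs_pos (sin ((a + b) / 2))). nra. Qed.

Lemma sin_lip a b : Rabs (sin a - sin b) <= Rabs (a - b).
Proof. rewrite form4. pose proof (sin_abs_le ((a-b)/2)). pose proof (COS_bound ((a+b)/2)).
  rewrite !Rabs_mult. assert (Rabs (cos ((a + b) / 2)) <= 1) by (unfold Rabs; destruct Rcase_abs; lra).
  assert (Rabs ((a-b)/2) = Rabs (a-b) / 2) by (unfold Rabs; repeat destruct Rcase_abs; lra).
  rewrite (Rabs_right 2) by lra.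
  pose proof (Rabs_pos (sin ((a - b) / 2))). pose proof (Rabs_pos (cos ((a + b) / 2))). nra. Qed.

Lemma loc_R (x:R) (P:R->Prop) (e:R) : 0 < e -> (forall y, Rabs (y - x) < e -> P y) -> locally x P.
Proof. intros He H. exists (mkposreal e He). intros y Hy. apply H. exact Hy. Qed.

Lemma isd_const (c x : R) : is_derive (fun _ : R => c) x 0.
Proof. auto_derive; auto. Qed.

Lemma glue_derive (f g1 g2 : R -> R) x0 l d : 0 < d ->
  (forall s, x0 - d < s <= x0 -> f s = g1 s) -> (forall s, x0 <= s < x0 + d -> f s = g2 s) ->
  is_derive g1 x0 l -> is_derive g2 x0 l -> is_derive f x0 l.
Proof.
  intros Hd0 H1 H2 D1 D2. apply is_derive_Reals. apply is_derive_Reals in D1, D2.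
  intros eps Heps. destruct (D1 eps Heps) as [d1 Hd1]. destruct (D2 eps Heps) as [d2 Hd2].
  assert (Hd : 0 < Rmin d (Rmin d1 d2)) by (apply Rmin_pos; [lra|apply Rmin_pos; apply cond_pos]).
  exists (mkposreal _ Hd). intros h Hh0 Hh. simpl in Hh.
  assert (Hm0 := Rmin_l d (Rmin d1 d2)). assert (Hm1 := Rmin_r d (Rmin d1 d2)).
  assert (Hm2 := Rmin_l d1 d2). assert (Hm3 := Rmin_r d1 d2).
  unfold Rabs in Hh; destruct Rcase_abs in Hh.
  - rewrite (H1 (x0+h)) by lra. rewrite (H1 x0) by lra. apply Hd1; auto.
    unfold Rabs; destruct Rcase_abs; lra.
  - rewrite (H2 (x0+h)) by lra. rewrite (H2 x0) by lra. apply Hd2; auto.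
    unfold Rabs; destruct Rcase_abs; lra.
Qed.

Lemma hh_derive r s : 0 < r -> is_derive (hh r) s (dh r s).
Proof.
  intros Hr. pose proof PI_gt3. assert (HP : 0 < PI * r) by nra.
  assert (Ha : forall s, s <= 0 -> hh r s = 0).
  { intros t Ht. unfold hh. rewrite cl_neg, Mx_small by nra. unfold Rdiv. rewrite Rmult_0_l, sin_0. ring. }
  assert (Hb : forall s, 0 <= s <= PI * r -> hh r s = - s + r * sin (s / r)).
  { intros t Ht. unfold hh. rewrite cl_mid, Mx_small by lra. ring. }
  assert (Hc : forall s, PI * r <= s -> hh r s = PI * r - 2 * s).
  { intros t Ht. unfold hh. rewrite cl_big, Mx_big by lra.
    replace (PI * r / r) with PI by (field; lra). rewrite sin_PI. ring. }
  assert (Db : forall s, is_derive (fun s => - s + r * sin (s / r)) s (cos (s/r) - 1)).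
  { intros t. auto_derive; auto. unfold Rdiv; field; lra. }
  assert (Dc : forall s, is_derive (fun s => PI * r - 2 * s) s (-2)).
  { intros t. auto_derive; auto. ring. }
  destruct (Rtotal_order s 0) as [H0|[H0|H0]].
  - unfold dh. rewrite cl_neg by lra. unfold Rdiv; rewrite Rmult_0_l, cos_0.
    apply (is_derive_ext_loc (fun _ => 0)). apply (loc_R _ _ (-s)); [lra|].
    intros y Hy. rewrite Ha; auto. unfold Rabs in Hy; destruct Rcase_abs in Hy; lra.
    replace (1-1) with 0 by ring. apply isd_const.
  - subst. unfold dh. rewrite cl_neg by lra. unfold Rdiv; rewrite Rmult_0_l, cos_0.
    replace (1-1) with 0 by ring.
    apply (glue_derive _ (fun _ => 0) (fun s => - s + r * sin (s / r)) 0 0 (PI*r)); auto.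
    + intros; apply Ha; lra.
    + intros t Ht. apply Hb; lra.
    + apply isd_const.
    + pose proof (Db 0) as D; unfold Rdiv in D; rewrite Rmult_0_l, cos_0 in D; replace (1-1) with 0 in D by ring; exact D.
  - destruct (Rtotal_order s (PI*r)) as [H1|[H1|H1]].
    + unfold dh. rewrite cl_mid by lra.
      apply (is_derive_ext_loc (fun s => - s + r * sin (s / r))); [|apply Db].
      apply (loc_R _ _ (Rmin s (PI*r - s))). apply Rmin_pos; lra.
      intros y Hy. assert (Hm1 := Rmin_l s (PI*r-s)). assert (Hm2 := Rmin_r s (PI*r-s)).
      rewrite Hb; auto. unfold Rabs in Hy; destruct Rcase_abs in Hy; lra.
    + subst. unfold dh. rewrite cl_big by lra.
      replace (PI * r / r) with PI by (field; lra). rewrite cos_PI.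
      replace (-1-1) with (-2) by ring.
      apply (glue_derive _ (fun s => - s + r * sin (s / r)) (fun s => PI * r - 2 * s) (PI*r) (-2) (PI*r)); auto.
      * intros; apply Hb; lra.
      * intros; apply Hc; lra.
      * pose proof (Db (PI*r)) as D. replace (PI * r / r) with PI in D by (field; lra). rewrite cos_PI in D.
        replace (-1-1) with (-2) in D by ring. exact D.
    + unfold dh. rewrite cl_big by lra.
      replace (PI * r / r) with PI by (field; lra). rewrite cos_PI.
      replace (-1-1) with (-2) by ring.
      apply (is_derive_ext_loc (fun s => PI * r - 2 * s)); [|apply Dc].
      apply (loc_R _ _ (s - PI*r)). lra.
      intros y Hy. rewrite Hc; auto. unfold Rabs in Hy; destruct Rcase_abs in Hy; lra.
Qed.

Lemma vv_derive r s : 0 < r -> is_derive (vv r) s (dv r s).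
Proof.
  intros Hr. pose proof PI_gt3. assert (HP : 0 < PI * r) by nra.
  assert (Ha : forall s, s <= 0 -> vv r s = 0).
  { intros t Ht. unfold vv. rewrite cl_neg by nra. unfold Rdiv. rewrite Rmult_0_l, cos_0. ring. }
  assert (Hb : forall s, 0 <= s <= PI * r -> vv r s = r * (1 - cos (s / r))).
  { intros t Ht. unfold vv. rewrite cl_mid by lra. ring. }
  assert (Hc : forall s, PI * r <= s -> vv r s = 2 * r).
  { intros t Ht. unfold vv. rewrite cl_big by lra.
    replace (PI * r / r) with PI by (field; lra). rewrite cos_PI. ring. }
  assert (Db : forall s, is_derive (fun s => r * (1 - cos (s / r))) s (sin (s/r))).
  { intros t. auto_derive; auto. unfold Rdiv; field; lra. }
  destruct (Rtotal_order s 0) as [H0|[H0|H0]].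
  - unfold dv. rewrite cl_neg by lra. unfold Rdiv; rewrite Rmult_0_l, sin_0.
    apply (is_derive_ext_loc (fun _ => 0)). apply (loc_R _ _ (-s)); [lra|].
    intros y Hy. rewrite Ha; auto. unfold Rabs in Hy; destruct Rcase_abs in Hy; lra.
    apply isd_const.
  - subst. unfold dv. rewrite cl_neg by lra. unfold Rdiv; rewrite Rmult_0_l, sin_0.
    apply (glue_derive _ (fun _ => 0) (fun s => r * (1 - cos (s / r))) 0 0 (PI*r)); auto.
    + intros; apply Ha; lra.
    + intros t Ht. apply Hb; lra.
    + apply isd_const.
    + pose proof (Db 0) as D; unfold Rdiv in D; rewrite Rmult_0_l, sin_0 in D; exact D.
  - destruct (Rtotal_order s (PI*r)) as [H1|[H1|H1]].
    + unfold dv. rewrite cl_mid by lra.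
      apply (is_derive_ext_loc (fun s => r * (1 - cos (s / r)))); [|apply Db].
      apply (loc_R _ _ (Rmin s (PI*r - s))). apply Rmin_pos; lra.
      intros y Hy. assert (Hm1 := Rmin_l s (PI*r-s)). assert (Hm2 := Rmin_r s (PI*r-s)).
      rewrite Hb; auto. unfold Rabs in Hy; destruct Rcase_abs in Hy; lra.
    + subst. unfold dv. rewrite cl_big by lra.
      replace (PI * r / r) with PI by (field; lra). rewrite sin_PI.
      apply (glue_derive _ (fun s => r * (1 - cos (s / r))) (fun _ => 2 * r) (PI*r) 0 (PI*r)); auto.
      * intros; apply Hb; lra.
      * intros; apply Hc; lra.
      * pose proof (Db (PI*r)) as D. replace (PI * r / r) with PI in D by (field; lra). rewrite sin_PI in D. exact D.
      * apply isd_const.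
    + unfold dv. rewrite cl_big by lra.
      replace (PI * r / r) with PI by (field; lra). rewrite sin_PI.
      apply (is_derive_ext_loc (fun _ => 2 * r)); [|apply isd_const].
      apply (loc_R _ _ (s - PI*r)). lra.
      intros y Hy. rewrite Hc; auto. unfold Rabs in Hy; destruct Rcase_abs in Hy; lra.
Qed.

Definition r1 : R := 1/10.
Definition r2 : R := 1/5.
Definition r3 : R := 1/10.
Definition cc2 : R := 33/5 - PI/25.
Definition s1 (x y : R) : R := 4/5*x - 3/5*y - 1.
Definition s2 (x y : R) : R := 24/25*x + 7/25*y - cc2.
Definition s3 (x y : R) : R := 4/5*x - 3/5*y - 10.
Definition PhiX (x y : R) : R := x + 4/5 * hh r1 (s1 x y) - 4/5 * hh r3 (s3 x y).
Definition PhiY (x y : R) : R := y - 3/5 * hh r1 (s1 x y) + hh r2 (s2 x y) - 3/5 * hh r3 (s3 x y).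
Definition PhiZ (x y : R) : R := vv r1 (s1 x y) - vv r2 (s2 x y) + vv r3 (s3 x y).
Definition Phi (p : R2) : R3 := ((PhiX (fst p) (snd p), PhiY (fst p) (snd p)), PhiZ (fst p) (snd p)).
Definition LL : R := 72/5.
Definition BB : R := 1.

Definition m1 (vx vy : R) := 4/5*vx - 3/5*vy.
Definition m2 (vx vy : R) := 24/25*vx + 7/25*vy.
Definition DX x y vx vy := vx + 4/5 * m1 vx vy * dh r1 (s1 x y) - 4/5 * m1 vx vy * dh r3 (s3 x y).
Definition DY x y vx vy := vy - 3/5 * m1 vx vy * dh r1 (s1 x y) + m2 vx vy * dh r2 (s2 x y)
   - 3/5 * m1 vx vy * dh r3 (s3 x y).
Definition DZ x y vx vy := m1 vx vy * dv r1 (s1 x y) - m2 vx vy * dv r2 (s2 x y) + m1 vx vy * dv r3 (s3 x y).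

Lemma r_pos : 0 < r1 /\ 0 < r2 /\ 0 < r3.
Proof. unfold r1, r2, r3; lra. Qed.

Lemma isd_plus (f g : R -> R) x df dg : is_derive f x df -> is_derive g x dg ->
  is_derive (fun t => f t + g t) x (df + dg).
Proof. intros. exact (is_derive_plus f g x df dg H H0). Qed.
Lemma isd_minus (f g : R -> R) x df dg : is_derive f x df -> is_derive g x dg ->
  is_derive (fun t => f t - g t) x (df - dg).
Proof. intros. exact (is_derive_minus f g x df dg H H0). Qed.
Lemma isd_scal (f : R -> R) k x df : is_derive f x df ->
  is_derive (fun t => k * f t) x (k * df).
Proof. intros. exact (is_derive_scal f x k df H). Qed.

Lemma comp_seg (F F' : R -> R) (a m tau : R) :
  (forall s, is_derive F s (F' s)) ->
  is_derive (fun t => F (a + t * m)) tau (m * F' (a + tau * m)).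
Proof. intros HF.
  assert (Hg : is_derive (fun t => a + t * m) tau m) by (auto_derive; auto; ring).
  pose proof (is_derive_comp F (fun t => a + t*m) tau _ _ (HF _) Hg). exact H. Qed.

Lemma seg_s1 x0 y0 vx vy t : s1 (x0 + t*vx) (y0 + t*vy) = s1 x0 y0 + t * m1 vx vy.
Proof. unfold s1, m1; ring. Qed.
Lemma seg_s2 x0 y0 vx vy t : s2 (x0 + t*vx) (y0 + t*vy) = s2 x0 y0 + t * m2 vx vy.
Proof. unfold s2, m2; ring. Qed.
Lemma seg_s3 x0 y0 vx vy t : s3 (x0 + t*vx) (y0 + t*vy) = s3 x0 y0 + t * m1 vx vy.
Proof. unfold s3, m1; ring. Qed.

Lemma isd_eq (f : R -> R) x d d' : d = d' -> is_derive f x d -> is_derive f x d'.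
Proof. intros ->; auto. Qed.

Lemma hh_seg r a m tau : 0 < r -> is_derive (fun t => hh r (a + t * m)) tau (m * dh r (a + tau * m)).
Proof. intros; apply comp_seg; intros; apply hh_derive; auto. Qed.
Lemma vv_seg r a m tau : 0 < r -> is_derive (fun t => vv r (a + t * m)) tau (m * dv r (a + tau * m)).
Proof. intros; apply comp_seg; intros; apply vv_derive; auto. Qed.
Lemma lin_seg a m tau : is_derive (fun t => a + t * m) tau m.
Proof. auto_derive; auto; ring. Qed.

Lemma derX x0 y0 vx vy tau :
  is_derive (fun t => PhiX (x0 + t*vx) (y0 + t*vy)) tau (DX (x0 + tau*vx) (y0 + tau*vy) vx vy).
Proof.
  destruct r_pos as [H1 [H2 H3]].
  apply (is_derive_ext (fun t => (x0 + t*vx) + 4/5 * hh r1 (s1 x0 y0 + t * m1 vx vy)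
                          - 4/5 * hh r3 (s3 x0 y0 + t * m1 vx vy))).
  { intros t. unfold PhiX. rewrite seg_s1, seg_s3. reflexivity. }
  eapply isd_eq.
  2:{ apply isd_minus. apply isd_plus. apply lin_seg. apply isd_scal. apply hh_seg; auto.
      apply isd_scal. apply hh_seg; auto. }
  unfold DX. rewrite seg_s1, seg_s3. simpl. ring.
Qed.

Lemma derY x0 y0 vx vy tau :
  is_derive (fun t => PhiY (x0 + t*vx) (y0 + t*vy)) tau (DY (x0 + tau*vx) (y0 + tau*vy) vx vy).
Proof.
  destruct r_pos as [H1 [H2 H3]].
  apply (is_derive_ext (fun t => (y0 + t*vy) - 3/5 * hh r1 (s1 x0 y0 + t * m1 vx vy)
           + hh r2 (s2 x0 y0 + t * m2 vx vy) - 3/5 * hh r3 (s3 x0 y0 + t * m1 vx vy))).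
  { intros t. unfold PhiY. rewrite seg_s1, seg_s2, seg_s3. reflexivity. }
  eapply isd_eq.
  2:{ apply isd_minus. apply isd_plus. apply isd_minus. apply lin_seg. apply isd_scal. apply hh_seg; auto.
      apply hh_seg; auto. apply isd_scal. apply hh_seg; auto. }
  unfold DY. rewrite seg_s1, seg_s2, seg_s3. simpl. ring.
Qed.

Lemma derZ x0 y0 vx vy tau :
  is_derive (fun t => PhiZ (x0 + t*vx) (y0 + t*vy)) tau (DZ (x0 + tau*vx) (y0 + tau*vy) vx vy).
Proof.
  destruct r_pos as [H1 [H2 H3]].
  apply (is_derive_ext (fun t => vv r1 (s1 x0 y0 + t * m1 vx vy)
           - vv r2 (s2 x0 y0 + t * m2 vx vy) + vv r3 (s3 x0 y0 + t * m1 vx vy))).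
  { intros t. unfold PhiZ. rewrite seg_s1, seg_s2, seg_s3. reflexivity. }
  eapply isd_eq.
  2:{ apply isd_plus. apply isd_minus. apply vv_seg; auto. apply vv_seg; auto. apply vv_seg; auto. }
  unfold DZ. rewrite seg_s1, seg_s2, seg_s3. simpl. ring.
Qed.

Definition inrect (x y : R) : Prop := 0 <= x <= LL /\ -1 <= y <= 1.

Lemma ord1 x y : inrect x y -> 0 <= s2 x y -> PI * r1 <= s1 x y.
Proof. unfold inrect, LL, s1, s2, cc2, r1. pose proof PI_gt3; pose proof PI_le4. lra. Qed.
Lemma ord2 x y : inrect x y -> 0 <= s3 x y -> PI * r2 <= s2 x y.
Proof. unfold inrect, LL, s3, s2, cc2, r2. pose proof PI_gt3; pose proof PI_le4. lra. Qed.

Lemma dh_neg r s : 0 < r -> s <= 0 -> dh r s = 0.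
Proof. intros. unfold dh. rewrite cl_neg by auto. unfold Rdiv; rewrite Rmult_0_l, cos_0. ring. Qed.
Lemma dv_neg r s : 0 < r -> s <= 0 -> dv r s = 0.
Proof. intros. unfold dv. rewrite cl_neg by auto. unfold Rdiv; rewrite Rmult_0_l, sin_0. ring. Qed.
Lemma dh_big r s : 0 < r -> PI * r <= s -> dh r s = -2.
Proof. intros. unfold dh. rewrite cl_big by auto. replace (PI*r/r) with PI by (field; lra). rewrite cos_PI. ring. Qed.
Lemma dv_big r s : 0 < r -> PI * r <= s -> dv r s = 0.
Proof. intros. unfold dv. rewrite cl_big by auto. replace (PI*r/r) with PI by (field; lra). rewrite sin_PI. ring. Qed.

Lemma D_isom x y vx vy : inrect x y ->
  (DX x y vx vy)^2 + (DY x y vx vy)^2 + (DZ x y vx vy)^2 = vx^2 + vy^2.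
Proof.
  intros Hr. destruct r_pos as [H1 [H2 H3]]. pose proof PI_gt3.
  unfold DX, DY, DZ.
  destruct (Rle_dec (s2 x y) 0).
  - assert (s3 x y <= 0).
    { destruct (Rle_dec (s3 x y) 0) as [h|h]; [exact h|].
      pose proof (ord2 x y Hr ltac:(lra)). unfold r2 in *. lra. }
    rewrite (dh_neg r2 (s2 x y)), (dv_neg r2 (s2 x y)), (dh_neg r3 (s3 x y)), (dv_neg r3 (s3 x y)) by auto.
    unfold dh, dv. set (C := cos (cl r1 (s1 x y) / r1)). set (S := sin (cl r1 (s1 x y) / r1)).
    assert (HSC : S^2 + C^2 = 1) by (unfold S, C; rewrite <- !Rsqr_pow2; apply sin2_cos2).
    assert (m1 vx vy ^2 * (S^2 + C^2) = m1 vx vy ^2) by (rewrite HSC; ring).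
    unfold m1 in *. nra.
  - pose proof (ord1 x y Hr ltac:(lra)).
    rewrite (dh_big r1 (s1 x y)), (dv_big r1 (s1 x y)) by auto.
    destruct (Rle_dec (s3 x y) 0).
    + rewrite (dh_neg r3 (s3 x y)), (dv_neg r3 (s3 x y)) by auto.
      unfold dh, dv. set (C := cos (cl r2 (s2 x y) / r2)). set (S := sin (cl r2 (s2 x y) / r2)).
      assert (HSC : S^2 + C^2 = 1) by (unfold S, C; rewrite <- !Rsqr_pow2; apply sin2_cos2).
      assert (m2 vx vy ^2 * (S^2 + C^2) = m2 vx vy ^2) by (rewrite HSC; ring).
      unfold m1, m2 in *. nra.
    + pose proof (ord2 x y Hr ltac:(lra)).
      rewrite (dh_big r2 (s2 x y)), (dv_big r2 (s2 x y)) by auto.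
      unfold dh, dv. set (C := cos (cl r3 (s3 x y) / r3)). set (S := sin (cl r3 (s3 x y) / r3)).
      assert (HSC : S^2 + C^2 = 1) by (unfold S, C; rewrite <- !Rsqr_pow2; apply sin2_cos2).
      assert (m1 vx vy ^2 * (S^2 + C^2) = m1 vx vy ^2) by (rewrite HSC; ring).
      unfold m1, m2 in *. nra.
Qed.

Lemma inrect_seg x0 y0 x1 y1 t : inrect x0 y0 -> inrect x1 y1 -> 0 <= t <= 1 ->
  inrect (x0 + t * (x1 - x0)) (y0 + t * (y1 - y0)).
Proof. unfold inrect. intros [[? ?] [? ?]] [[? ?] [? ?]] [? ?]. nra. Qed.

Lemma mvt_dir x0 y0 x1 y1 wx wy wz :
  exists c, 0 < c < 1 /\
   wx * (PhiX x1 y1 - PhiX x0 y0) + wy * (PhiY x1 y1 - PhiY x0 y0) + wz * (PhiZ x1 y1 - PhiZ x0 y0)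
   = wx * DX (x0 + c*(x1-x0)) (y0 + c*(y1-y0)) (x1-x0) (y1-y0)
   + wy * DY (x0 + c*(x1-x0)) (y0 + c*(y1-y0)) (x1-x0) (y1-y0)
   + wz * DZ (x0 + c*(x1-x0)) (y0 + c*(y1-y0)) (x1-x0) (y1-y0).
Proof.
  set (vx := x1 - x0). set (vy := y1 - y0).
  set (f := fun t => wx * PhiX (x0 + t*vx) (y0 + t*vy) + wy * PhiY (x0 + t*vx) (y0 + t*vy)
                    + wz * PhiZ (x0 + t*vx) (y0 + t*vy)).
  set (f' := fun t => wx * DX (x0 + t*vx) (y0 + t*vy) vx vy + wy * DY (x0 + t*vx) (y0 + t*vy) vx vy
                    + wz * DZ (x0 + t*vx) (y0 + t*vy) vx vy).
  destruct (MVT_cor2 f f' 0 1) as [c [Hc1 Hc2]]; [lra| |].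
  - intros c _. apply is_derive_Reals. unfold f, f'.
    apply isd_plus. apply isd_plus.
    + apply isd_scal. apply derX.
    + apply isd_scal. apply derY.
    + apply isd_scal. apply derZ.
  - exists c. split; [lra|]. unfold f, f' in Hc1.
    replace (x0 + 1*vx) with x1 in Hc1 by (unfold vx; ring).
    replace (y0 + 1*vy) with y1 in Hc1 by (unfold vy; ring).
    replace (x0 + 0*vx) with x0 in Hc1 by ring.
    replace (y0 + 0*vy) with y0 in Hc1 by ring.
    lra.
Qed.

Lemma sqrt_mono a b : 0 <= a <= b -> sqrt a <= sqrt b.
Proof. intros. apply sqrt_le_1; lra. Qed.

Lemma cs3 a1 a2 a3 b1 b2 b3 :
  a1*b1 + a2*b2 + a3*b3 <= sqrt (a1^2+a2^2+a3^2) * sqrt (b1^2+b2^2+b3^2).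
Proof.
  rewrite <- sqrt_mult by nra.
  destruct (Rle_dec (a1*b1 + a2*b2 + a3*b3) 0).
  - pose proof (sqrt_pos ((a1 ^ 2 + a2 ^ 2 + a3 ^ 2) * (b1 ^ 2 + b2 ^ 2 + b3 ^ 2))). lra.
  - rewrite <- (sqrt_pow2 (a1*b1 + a2*b2 + a3*b3)) at 1 by lra.
    apply sqrt_mono. split. nra.
    assert ((a1 ^ 2 + a2 ^ 2 + a3 ^ 2) * (b1 ^ 2 + b2 ^ 2 + b3 ^ 2) - (a1 * b1 + a2 * b2 + a3 * b3) ^ 2
      = (a1*b2 - a2*b1)^2 + (a1*b3 - a3*b1)^2 + (a2*b3 - a3*b2)^2) by ring.
    pose proof (pow2_ge_0 (a1*b2 - a2*b1)). pose proof (pow2_ge_0 (a1*b3 - a3*b1)). pose proof (pow2_ge_0 (a2*b3 - a3*b2)).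
    lra.
Qed.

Lemma norm_le_sum z1 z2 z3 : sqrt (z1^2+z2^2+z3^2) <= Rabs z1 + Rabs z2 + Rabs z3.
Proof.
  rewrite <- (sqrt_pow2 (Rabs z1 + Rabs z2 + Rabs z3)) by (pose proof (Rabs_pos z1); pose proof (Rabs_pos z2); pose proof (Rabs_pos z3); lra).
  apply sqrt_mono. split. nra.
  pose proof (Rabs_pos z1); pose proof (Rabs_pos z2); pose proof (Rabs_pos z3).
  rewrite <- (pow2_abs z1), <- (pow2_abs z2), <- (pow2_abs z3). nra.
Qed.

Definition L2 x0 y0 x1 y1 := sqrt ((x1-x0)^2 + (y1-y0)^2).
Definition L3 x0 y0 x1 y1 := sqrt ((PhiX x1 y1 - PhiX x0 y0)^2 + (PhiY x1 y1 - PhiY x0 y0)^2 + (PhiZ x1 y1 - PhiZ x0 y0)^2).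

Lemma lipA x0 y0 x1 y1 : inrect x0 y0 -> inrect x1 y1 -> L3 x0 y0 x1 y1 <= L2 x0 y0 x1 y1.
Proof.
  intros H0 H1. unfold L3, L2.
  set (dX := PhiX x1 y1 - PhiX x0 y0). set (dY := PhiY x1 y1 - PhiY x0 y0). set (dZ := PhiZ x1 y1 - PhiZ x0 y0).
  destruct (mvt_dir x0 y0 x1 y1 dX dY dZ) as [c [Hc E]].
  pose proof (D_isom (x0 + c*(x1-x0)) (y0 + c*(y1-y0)) (x1-x0) (y1-y0) (inrect_seg x0 y0 x1 y1 c H0 H1 ltac:(split; lra))) as I.
  fold dX dY dZ in E.
  set (X1 := DX (x0 + c * (x1 - x0)) (y0 + c * (y1 - y0)) (x1 - x0) (y1 - y0)) in *.
  set (X2 := DY (x0 + c * (x1 - x0)) (y0 + c * (y1 - y0)) (x1 - x0) (y1 - y0)) in *.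
  set (X3 := DZ (x0 + c * (x1 - x0)) (y0 + c * (y1 - y0)) (x1 - x0) (y1 - y0)) in *.
  apply sqrt_mono. split. nra.
  pose proof (pow2_ge_0 (dX - X1)). pose proof (pow2_ge_0 (dY - X2)). pose proof (pow2_ge_0 (dZ - X3)).
  assert (dX^2+dY^2+dZ^2 = dX*X1 + dY*X2 + dZ*X3) by (rewrite <- E; ring).
  nra.
Qed.

Lemma dh_lip r s t : 0 < r -> Rabs (dh r s - dh r t) <= Rabs (s - t) / r.
Proof. intros Hr. unfold dh.
  replace (cos (cl r s / r) - 1 - (cos (cl r t / r) - 1)) with (cos (cl r s / r) - cos (cl r t / r)) by ring.
  eapply Rle_trans. apply cos_lip.
  replace (cl r s / r - cl r t / r) with ((cl r s - cl r t) / r) by (field; lra).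
  rewrite Rabs_div by lra. rewrite (Rabs_right r) by lra.
  apply Rmult_le_compat_r. apply Rlt_le, Rinv_0_lt_compat; lra. apply cl_lip; auto. Qed.
Lemma dv_lip r s t : 0 < r -> Rabs (dv r s - dv r t) <= Rabs (s - t) / r.
Proof. intros Hr. unfold dv.
  eapply Rle_trans. apply sin_lip.
  replace (cl r s / r - cl r t / r) with ((cl r s - cl r t) / r) by (field; lra).
  rewrite Rabs_div by lra. rewrite (Rabs_right r) by lra.
  apply Rmult_le_compat_r. apply Rlt_le, Rinv_0_lt_compat; lra. apply cl_lip; auto. Qed.

Lemma abs_prod_le m a N A : Rabs m <= N -> Rabs a <= A -> Rabs (m * a) <= N * A.
Proof. intros. rewrite Rabs_mult. pose proof (Rabs_pos m); pose proof (Rabs_pos a). nra. Qed.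

Lemma m1_le vx vy : Rabs (m1 vx vy) <= Rabs vx + Rabs vy.
Proof. unfold m1. unfold Rabs; repeat destruct Rcase_abs; lra. Qed.
Lemma m2_le vx vy : Rabs (m2 vx vy) <= Rabs vx + Rabs vy.
Proof. unfold m2. unfold Rabs; repeat destruct Rcase_abs; lra. Qed.

Lemma D_var x0 y0 vx vy c : 0 <= c <= 1 ->
  let N := Rabs vx + Rabs vy in
  Rabs (DX x0 y0 vx vy - DX (x0 + c*vx) (y0 + c*vy) vx vy)
  + Rabs (DY x0 y0 vx vy - DY (x0 + c*vx) (y0 + c*vy) vx vy)
  + Rabs (DZ x0 y0 vx vy - DZ (x0 + c*vx) (y0 + c*vy) vx vy) <= 58 * N^2.
Proof.
  intros Hc N. destruct r_pos as [H1 [H2 H3]].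
  pose proof (m1_le vx vy) as Hm1. pose proof (m2_le vx vy) as Hm2. fold N in Hm1, Hm2.
  assert (HN : 0 <= N) by (unfold N; pose proof (Rabs_pos vx); pose proof (Rabs_pos vy); lra).
  assert (Hs1 : Rabs (s1 x0 y0 - s1 (x0 + c*vx) (y0 + c*vy)) <= N).
  { replace (s1 x0 y0 - s1 (x0 + c*vx) (y0 + c*vy)) with (- c * m1 vx vy) by (unfold s1, m1; ring).
    rewrite Rabs_mult. rewrite Rabs_Ropp, (Rabs_right c) by lra. pose proof (Rabs_pos (m1 vx vy)). nra. }
  assert (Hs2 : Rabs (s2 x0 y0 - s2 (x0 + c*vx) (y0 + c*vy)) <= N).
  { replace (s2 x0 y0 - s2 (x0 + c*vx) (y0 + c*vy)) with (- c * m2 vx vy) by (unfold s2, m2; ring).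
    rewrite Rabs_mult. rewrite Rabs_Ropp, (Rabs_right c) by lra. pose proof (Rabs_pos (m2 vx vy)). nra. }
  assert (Hs3 : Rabs (s3 x0 y0 - s3 (x0 + c*vx) (y0 + c*vy)) <= N).
  { replace (s3 x0 y0 - s3 (x0 + c*vx) (y0 + c*vy)) with (- c * m1 vx vy) by (unfold s3, m1; ring).
    rewrite Rabs_mult. rewrite Rabs_Ropp, (Rabs_right c) by lra. pose proof (Rabs_pos (m1 vx vy)). nra. }
  set (x' := x0 + c*vx) in *. set (y' := y0 + c*vy) in *.
  assert (A1 : Rabs (dh r1 (s1 x0 y0) - dh r1 (s1 x' y')) <= 10 * N).
  { eapply Rle_trans. apply dh_lip; auto. unfold r1. match goal with |- ?a / _ <= _ => replace (a / (1/10)) with (10 * a) by field end. lra. }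
  assert (A2 : Rabs (dh r2 (s2 x0 y0) - dh r2 (s2 x' y')) <= 5 * N).
  { eapply Rle_trans. apply dh_lip; auto. unfold r2. match goal with |- ?a / _ <= _ => replace (a / (1/5)) with (5 * a) by field end. lra. }
  assert (A3 : Rabs (dh r3 (s3 x0 y0) - dh r3 (s3 x' y')) <= 10 * N).
  { eapply Rle_trans. apply dh_lip; auto. unfold r3. match goal with |- ?a / _ <= _ => replace (a / (1/10)) with (10 * a) by field end. lra. }
  assert (B1 : Rabs (dv r1 (s1 x0 y0) - dv r1 (s1 x' y')) <= 10 * N).
  { eapply Rle_trans. apply dv_lip; auto. unfold r1. match goal with |- ?a / _ <= _ => replace (a / (1/10)) with (10 * a) by field end. lra. }
  assert (B2 : Rabs (dv r2 (s2 x0 y0) - dv r2 (s2 x' y')) <= 5 * N).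
  { eapply Rle_trans. apply dv_lip; auto. unfold r2. match goal with |- ?a / _ <= _ => replace (a / (1/5)) with (5 * a) by field end. lra. }
  assert (B3 : Rabs (dv r3 (s3 x0 y0) - dv r3 (s3 x' y')) <= 10 * N).
  { eapply Rle_trans. apply dv_lip; auto. unfold r3. match goal with |- ?a / _ <= _ => replace (a / (1/10)) with (10 * a) by field end. lra. }
  pose proof (abs_prod_le _ _ _ _ Hm1 A1) as P1.
  pose proof (abs_prod_le _ _ _ _ Hm2 A2) as P2.
  pose proof (abs_prod_le _ _ _ _ Hm1 A3) as P3.
  pose proof (abs_prod_le _ _ _ _ Hm1 B1) as Q1.
  pose proof (abs_prod_le _ _ _ _ Hm2 B2) as Q2.
  pose proof (abs_prod_le _ _ _ _ Hm1 B3) as Q3.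
  unfold DX, DY, DZ.
  set (a1 := dh r1 (s1 x0 y0) - dh r1 (s1 x' y')) in *.
  set (a2 := dh r2 (s2 x0 y0) - dh r2 (s2 x' y')) in *.
  set (a3 := dh r3 (s3 x0 y0) - dh r3 (s3 x' y')) in *.
  set (b1 := dv r1 (s1 x0 y0) - dv r1 (s1 x' y')) in *.
  set (b2 := dv r2 (s2 x0 y0) - dv r2 (s2 x' y')) in *.
  set (b3 := dv r3 (s3 x0 y0) - dv r3 (s3 x' y')) in *.
  set (M1 := m1 vx vy) in *. set (M2 := m2 vx vy) in *.
  replace (vx + 4 / 5 * M1 * dh r1 (s1 x0 y0) - 4 / 5 * M1 * dh r3 (s3 x0 y0) -
      (vx + 4 / 5 * M1 * dh r1 (s1 x' y') - 4 / 5 * M1 * dh r3 (s3 x' y')))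
    with (4/5 * (M1 * a1) - 4/5 * (M1 * a3)) by (unfold a1, a3; ring).
  replace (vy - 3 / 5 * M1 * dh r1 (s1 x0 y0) + M2 * dh r2 (s2 x0 y0) - 3 / 5 * M1 * dh r3 (s3 x0 y0) -
    (vy - 3 / 5 * M1 * dh r1 (s1 x' y') + M2 * dh r2 (s2 x' y') - 3 / 5 * M1 * dh r3 (s3 x' y')))
    with (- (3/5) * (M1 * a1) + M2 * a2 - 3/5 * (M1 * a3)) by (unfold a1, a2, a3; ring).
  replace (M1 * dv r1 (s1 x0 y0) - M2 * dv r2 (s2 x0 y0) + M1 * dv r3 (s3 x0 y0) -
    (M1 * dv r1 (s1 x' y') - M2 * dv r2 (s2 x' y') + M1 * dv r3 (s3 x' y')))
    with (M1 * b1 - M2 * b2 + M1 * b3) by (unfold b1, b2, b3; ring).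
  set (u1 := M1 * a1) in *. set (u2 := M2 * a2) in *. set (u3 := M1 * a3) in *.
  set (w1 := M1 * b1) in *. set (w2 := M2 * b2) in *. set (w3 := M1 * b3) in *.
  assert (T1 : Rabs (4/5 * u1 - 4/5 * u3) <= 4/5 * Rabs u1 + 4/5 * Rabs u3)
    by (clear -u1; unfold Rabs; repeat destruct Rcase_abs; lra).
  assert (T2 : Rabs (- (3/5) * u1 + u2 - 3/5 * u3) <= 3/5 * Rabs u1 + Rabs u2 + 3/5 * Rabs u3)
    by (clear -u1; unfold Rabs; repeat destruct Rcase_abs; lra).
  assert (T3 : Rabs (w1 - w2 + w3) <= Rabs w1 + Rabs w2 + Rabs w3)
    by (clear -u1; unfold Rabs; repeat destruct Rcase_abs; lra).
  clearbody u1 u2 u3 w1 w2 w3. lra.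
Qed.

Ltac clear_lets := repeat match goal with H := _ |- _ => clearbody H end.

Lemma lipB x0 y0 x1 y1 : inrect x0 y0 -> inrect x1 y1 ->
  L2 x0 y0 x1 y1 - 116 * (L2 x0 y0 x1 y1)^2 <= L3 x0 y0 x1 y1.
Proof.
  intros H0 H1.
  assert (HLL : (L2 x0 y0 x1 y1)^2 = (x1-x0)^2 + (y1-y0)^2).
  { unfold L2. rewrite pow2_sqrt. reflexivity. pose proof (pow2_ge_0 (x1-x0)). pose proof (pow2_ge_0 (y1-y0)). lra. }
  set (L := L2 x0 y0 x1 y1) in *.
  assert (HL0 : 0 <= L) by apply sqrt_pos.
  assert (HL3 : 0 <= L3 x0 y0 x1 y1) by apply sqrt_pos.
  set (vx := x1 - x0) in *. set (vy := y1 - y0) in *.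
  destruct (Req_dec L 0) as [HL|HL].
  { rewrite HL. clear_lets; lra. }
  set (Y1 := DX x0 y0 vx vy). set (Y2 := DY x0 y0 vx vy). set (Y3 := DZ x0 y0 vx vy).
  destruct (mvt_dir x0 y0 x1 y1 Y1 Y2 Y3) as [c [Hc E]]. fold vx vy in E.
  pose proof (D_isom x0 y0 vx vy H0) as IY. fold Y1 Y2 Y3 in IY.
  pose proof (D_var x0 y0 vx vy c ltac:(split; lra)) as V. simpl in V. fold Y1 Y2 Y3 in V.
  set (X1 := DX (x0 + c * vx) (y0 + c * vy) vx vy) in *.
  set (X2 := DY (x0 + c * vx) (y0 + c * vy) vx vy) in *.
  set (X3 := DZ (x0 + c * vx) (y0 + c * vy) vx vy) in *.
  set (dX := PhiX x1 y1 - PhiX x0 y0) in *. set (dY := PhiY x1 y1 - PhiY x0 y0) in *.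
  set (dZ := PhiZ x1 y1 - PhiZ x0 y0) in *.
  assert (HY : sqrt (Y1^2+Y2^2+Y3^2) = L) by (rewrite IY; reflexivity).
  pose proof (cs3 Y1 Y2 Y3 dX dY dZ) as CS1. rewrite HY in CS1. fold (L3 x0 y0 x1 y1) in CS1.
  pose proof (cs3 Y1 Y2 Y3 (Y1-X1) (Y2-X2) (Y3-X3)) as CS2. rewrite HY in CS2.
  pose proof (norm_le_sum (Y1-X1) (Y2-X2) (Y3-X3)) as NS.
  assert (HN : (Rabs vx + Rabs vy)^2 <= 2 * L^2).
  { rewrite HLL. rewrite <- (pow2_abs vx), <- (pow2_abs vy).
    pose proof (pow2_ge_0 (Rabs vx - Rabs vy)). clear_lets; nra. }
  assert (HL' : 0 < L) by (clear_lets; lra).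
  assert (K : Y1*dX + Y2*dY + Y3*dZ >= L^2 - L * (116 * L^2)).
  { rewrite E. replace (Y1 * X1 + Y2 * X2 + Y3 * X3) with ((Y1^2+Y2^2+Y3^2) - (Y1*(Y1-X1) + Y2*(Y2-X2) + Y3*(Y3-X3))) by ring.
    rewrite IY, <- HLL.
    assert (sqrt ((Y1 - X1) ^ 2 + (Y2 - X2) ^ 2 + (Y3 - X3) ^ 2) <= 116 * L^2) by (clear_lets; lra).
    assert (L * sqrt ((Y1 - X1) ^ 2 + (Y2 - X2) ^ 2 + (Y3 - X3) ^ 2) <= L * (116 * L^2))
      by (apply Rmult_le_compat_l; clear_lets; lra).
    clear_lets; lra. }
  assert (EL3 : L3 x0 y0 x1 y1 = sqrt (dX^2+dY^2+dZ^2)) by reflexivity.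
  assert (L * (L - 116 * L^2) <= L * L3 x0 y0 x1 y1) by (clear_lets; rewrite EL3; lra).
  apply Rmult_le_reg_l in H; clear_lets; lra.
Qed.

Lemma part_le a b ts : is_partition a b ts -> a <= b.
Proof. revert a. induction ts as [|t ts IH]; simpl; intros a H.
  - lra.
  - destruct H as [H1 H2]. specialize (IH _ H2). lra. Qed.

Lemma part_in a b ts : is_partition a b ts -> forall t, In t ts -> a < t <= b.
Proof. revert a. induction ts as [|t ts IH]; simpl; intros a H s Hs.
  - contradiction.
  - destruct H as [H1 H2]. destruct Hs as [Hs|Hs].
    + subst. pose proof (part_le _ _ _ H2). lra.
    + specialize (IH _ H2 s Hs). lra. Qed.

Lemma part_app a m b l1 l2 : is_partition a m l1 -> is_partition m b l2 -> is_partition a b (l1 ++ l2).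
Proof. revert a. induction l1 as [|t l IH]; simpl; intros a H1 H2.
  - subst. auto.
  - destruct H1. split; [auto| eapply IH; eauto]. Qed.

Lemma poly_app {A} (d : A -> A -> R) g a m l1 l2 : is_partition a m l1 ->
  poly_len d g a (l1 ++ l2) = poly_len d g a l1 + poly_len d g m l2.
Proof. revert a. induction l1 as [|t l IH]; simpl; intros a H1.
  - subst. ring.
  - destruct H1. rewrite (IH t H0). ring. Qed.

Fixpoint sub_pts (u h : R) (n : nat) : list R :=
  match n with O => nil | S k => (u + h) :: sub_pts (u + h) h k end.

Lemma sub_pts_part u h n : 0 < h -> is_partition u (u + INR n * h) (sub_pts u h n).
Proof. revert u. induction n as [|n IH]; cbn [sub_pts is_partition]; intros u Hh.
  - simpl; ring.
  - split. lra. specialize (IH (u+h) Hh).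
    replace (u + INR (S n) * h) with (u + h + INR n * h) by (rewrite S_INR; ring). exact IH. Qed.

Definition subdiv (u w : R) (n : nat) := sub_pts u ((w - u) / INR n) n.

Lemma subdiv_part u w n : (0 < n)%nat -> u < w -> is_partition u w (subdiv u w n).
Proof. intros Hn Huw. unfold subdiv.
  assert (0 < INR n) by (apply lt_0_INR; auto).
  replace w with (u + INR n * ((w - u) / INR n)) at 1 by (field; lra).
  apply sub_pts_part. apply Rdiv_lt_0_compat; lra. Qed.

Fixpoint refine (n : nat) (t0 : R) (ts : list R) : list R :=
  match ts with nil => nil | t :: ts' => subdiv t0 t n ++ refine n t ts' end.

Lemma refine_part n a b ts : (0 < n)%nat -> is_partition a b ts -> is_partition a b (refine n a ts).
Proof. revert a. induction ts as [|t ts IH]; simpl; intros a Hn H.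
  - auto.
  - destruct H. eapply part_app. apply subdiv_part; eauto. apply IH; auto. Qed.

Lemma poly_ge_end {A} (d : A -> A -> R) g :
  (forall x, d x x = 0) -> (forall x y z, d x z <= d x y + d y z) ->
  forall l a m, is_partition a m l -> d (g a) (g m) <= poly_len d g a l.
Proof. intros D0 Dt. induction l as [|t l IH]; simpl; intros a m H.
  - subst. rewrite D0. lra.
  - destruct H. specialize (IH t m H0). pose proof (Dt (g a) (g t) (g m)). lra. Qed.

Lemma refine_ge {A} (d : A -> A -> R) g n :
  (0 < n)%nat -> (forall x, d x x = 0) -> (forall x y z, d x z <= d x y + d y z) ->
  forall ts a b, is_partition a b ts -> poly_len d g a ts <= poly_len d g a (refine n a ts).
Proof. intros Hn D0 Dt. induction ts as [|t ts IH]; simpl; intros a b H.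
  - lra.
  - destruct H. rewrite (poly_app d g a t). 2: apply subdiv_part; auto.
    pose proof (poly_ge_end d g D0 Dt (subdiv a t n) a t (subdiv_part a t n Hn H)).
    specialize (IH t b H0). lra. Qed.

Fixpoint fine (del t0 : R) (l : list R) : Prop :=
  match l with nil => True | t :: l' => t - t0 < del /\ fine del t l' end.

Lemma fine_app del a m l1 l2 : is_partition a m l1 -> fine del a l1 -> fine del m l2 -> fine del a (l1 ++ l2).
Proof. revert a. induction l1 as [|t l IH]; simpl; intros a H1 F1 F2.
  - subst; auto.
  - destruct H1, F1. split; [auto| eapply IH; eauto]. Qed.

Lemma sub_pts_fine del u h n : h < del -> fine del u (sub_pts u h n).
Proof. revert u. induction n as [|n IH]; simpl; intros u Hh; auto. split. lra. apply IH; auto. Qed.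

Lemma refine_fine n a b del ts : (0 < n)%nat -> (b - a) / INR n < del ->
  forall t0, a <= t0 -> is_partition t0 b ts -> fine del t0 (refine n t0 ts).
Proof. intros Hn Hd. assert (HI : 0 < INR n) by (apply lt_0_INR; auto).
  induction ts as [|t ts IH]; simpl; intros t0 Ha H; auto.
  destruct H as [H0 H1]. eapply fine_app. apply subdiv_part; auto.
  - unfold subdiv. apply sub_pts_fine. pose proof (part_le _ _ _ H1).
    apply Rle_lt_trans with ((b-a)/INR n); auto. apply Rmult_le_compat_r.
    apply Rlt_le, Rinv_0_lt_compat; auto. lra.
  - apply IH; auto. lra. Qed.

Lemma dist2_refl p : dist2 p p = 0.
Proof. unfold dist2. replace ((fst p - fst p) ^ 2 + (snd p - snd p) ^ 2) with 0 by ring. apply sqrt_0. Qed.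

Lemma dist2_pos p q : 0 <= dist2 p q.
Proof. apply sqrt_pos. Qed.

Lemma dist2_sym p q : dist2 p q = dist2 q p.
Proof. unfold dist2. f_equal. ring. Qed.

Lemma cs2 a1 a2 b1 b2 : a1*b1 + a2*b2 <= sqrt (a1^2+a2^2) * sqrt (b1^2+b2^2).
Proof.
  rewrite <- sqrt_mult by nra.
  destruct (Rle_dec (a1*b1 + a2*b2) 0).
  - pose proof (sqrt_pos ((a1 ^ 2 + a2 ^ 2) * (b1 ^ 2 + b2 ^ 2))). lra.
  - rewrite <- (sqrt_pow2 (a1*b1 + a2*b2)) at 1 by lra.
    apply sqrt_le_1. nra. nra.
    assert ((a1 ^ 2 + a2 ^ 2) * (b1 ^ 2 + b2 ^ 2) - (a1 * b1 + a2 * b2) ^ 2 = (a1*b2 - a2*b1)^2) by ring.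
    pose proof (pow2_ge_0 (a1*b2 - a2*b1)). lra.
Qed.

Lemma dist2_triang p q r : dist2 p r <= dist2 p q + dist2 q r.
Proof.
  unfold dist2. set (u1 := fst p - fst q). set (u2 := snd p - snd q).
  set (w1 := fst q - fst r). set (w2 := snd q - snd r).
  replace (fst p - fst r) with (u1 + w1) by (unfold u1, w1; ring).
  replace (snd p - snd r) with (u2 + w2) by (unfold u2, w2; ring).
  clearbody u1 u2 w1 w2.
  pose proof (cs2 u1 u2 w1 w2). pose proof (sqrt_pos (u1^2+u2^2)). pose proof (sqrt_pos (w1^2+w2^2)).
  rewrite <- (sqrt_pow2 (sqrt (u1 ^ 2 + u2 ^ 2) + sqrt (w1 ^ 2 + w2 ^ 2))) by lra.
  apply sqrt_le_1. apply Rplus_le_le_0_compat; apply pow2_ge_0. apply pow2_ge_0.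
  replace ((sqrt (u1 ^ 2 + u2 ^ 2) + sqrt (w1 ^ 2 + w2 ^ 2)) ^ 2) with
    ((sqrt (u1 ^ 2 + u2 ^ 2))^2 + 2 * (sqrt (u1 ^ 2 + u2 ^ 2) * sqrt (w1 ^ 2 + w2 ^ 2)) + (sqrt (w1 ^ 2 + w2 ^ 2))^2) by ring.
  rewrite !pow2_sqrt by (apply Rplus_le_le_0_compat; apply pow2_ge_0). lra.
Qed.

Lemma fst_le_dist2 p q : Rabs (fst p - fst q) <= dist2 p q.
Proof. unfold dist2. rewrite <- sqrt_Rsqr_abs. apply sqrt_le_1. apply Rle_0_sqr.
  apply Rplus_le_le_0_compat; apply pow2_ge_0.
  unfold Rsqr. pose proof (pow2_ge_0 (snd p - snd q)). lra. Qed.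
Lemma snd_le_dist2 p q : Rabs (snd p - snd q) <= dist2 p q.
Proof. unfold dist2. rewrite <- sqrt_Rsqr_abs. apply sqrt_le_1. apply Rle_0_sqr.
  apply Rplus_le_le_0_compat; apply pow2_ge_0.
  unfold Rsqr. pose proof (pow2_ge_0 (fst p - fst q)). lra. Qed.
Lemma dist2_le_sum p q : dist2 p q <= Rabs (fst p - fst q) + Rabs (snd p - snd q).
Proof. unfold dist2.
  rewrite <- (sqrt_pow2 (Rabs (fst p - fst q) + Rabs (snd p - snd q))) by (pose proof (Rabs_pos (fst p - fst q)); pose proof (Rabs_pos (snd p - snd q)); lra).
  apply sqrt_le_1. apply Rplus_le_le_0_compat; apply pow2_ge_0. apply pow2_ge_0.
  pose proof (Rabs_pos (fst p - fst q)); pose proof (Rabs_pos (snd p - snd q)).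
  rewrite <- (pow2_abs (fst p - fst q)) at 1. rewrite <- (pow2_abs (snd p - snd q)) at 1. nra.
Qed.

Definition clampab (a b s : R) := Rmax a (Rmin b s).

Lemma clamp_in a b s : a <= b -> a <= clampab a b s <= b.
Proof. intros. unfold clampab. unfold Rmax, Rmin. repeat destruct Rle_dec; lra. Qed.
Lemma clamp_id a b s : a <= s <= b -> clampab a b s = s.
Proof. intros. unfold clampab. unfold Rmax, Rmin. repeat destruct Rle_dec; lra. Qed.
Lemma clamp_lip a b s x : a <= x <= b -> Rabs (clampab a b s - x) <= Rabs (s - x).
Proof. intros. unfold clampab. unfold Rmax, Rmin. repeat destruct Rle_dec; unfold Rabs; repeat destruct Rcase_abs; lra. Qed.

Lemma comp_cont (g : R -> R2) (proj : R2 -> R) a b :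
  a <= b -> continuous_curve_on g a b ->
  (forall p q, Rabs (proj p - proj q) <= dist2 p q) ->
  forall x, a <= x <= b -> continuity_pt (fun s => proj (g (clampab a b s))) x.
Proof.
  intros Hab Hc Hp x Hx. apply continuity_pt_locally. intros eps.
  destruct (Hc x Hx eps (cond_pos eps)) as [del [Hdel H]].
  exists (mkposreal del Hdel). intros u Hu. change (Rabs (u - x) < del) in Hu.
  rewrite (clamp_id a b x Hx).
  pose proof (clamp_in a b u Hab). pose proof (clamp_lip a b u x Hx).
  specialize (H (clampab a b u) H0 ltac:(lra)).
  eapply Rle_lt_trans. apply Hp. exact H.
Qed.

Lemma unif_cont g a b : a <= b -> continuous_curve_on g a b ->
  forall eta, 0 < eta -> exists del, 0 < del /\ forall s s', a <= s <= b -> a <= s' <= b ->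
    Rabs (s - s') < del -> dist2 (g s) (g s') < eta.
Proof.
  intros Hab Hc eta Heta.
  assert (He2 : 0 < eta/2) by lra.
  destruct (@Heine_cor2 (fun s => fst (g (clampab a b s))) a b
     (comp_cont g fst a b Hab Hc (fun p q => fst_le_dist2 p q)) (mkposreal _ He2)) as [d1 H1].
  destruct (@Heine_cor2 (fun s => snd (g (clampab a b s))) a b
     (comp_cont g snd a b Hab Hc (fun p q => snd_le_dist2 p q)) (mkposreal _ He2)) as [d2 H2].
  exists (Rmin d1 d2). split. apply Rmin_pos; apply cond_pos.
  intros s s' Hs Hs' Hss.
  specialize (H1 s s' Hs Hs' ltac:(pose proof (Rmin_l d1 d2); lra)).
  specialize (H2 s s' Hs Hs' ltac:(pose proof (Rmin_r d1 d2); lra)).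
  simpl in H1, H2. rewrite !clamp_id in H1, H2 by auto.
  eapply Rle_lt_trans. apply dist2_le_sum. lra.
Qed.

Fixpoint close (eta : R) (g : R -> R2) (t0 : R) (l : list R) : Prop :=
  match l with nil => True | t :: l' => dist2 (g t0) (g t) < eta /\ close eta g t l' end.

Lemma poly2_nonneg g t0 l : 0 <= poly_len dist2 g t0 l.
Proof. revert t0. induction l as [|t l IH]; simpl; intros t0. lra.
  pose proof (dist2_pos (g t0) (g t)). pose proof (IH t). lra. Qed.

Lemma dist3_pos u w : 0 <= dist3 u w.
Proof. apply sqrt_pos. Qed.

Lemma poly3_nonneg (h : R -> R3) t0 l : 0 <= poly_len dist3 h t0 l.
Proof. revert t0. induction l as [|t l IH]; simpl; intros t0. lra.
  pose proof (dist3_pos (h t0) (h t)). pose proof (IH t). lra. Qed.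

Lemma poly_upper (P : R2 -> R3) (O : R2 -> Prop) g a b :
  (forall p q, O p -> O q -> dist3 (P p) (P q) <= dist2 p q) ->
  (forall s, a <= s <= b -> O (g s)) ->
  forall ts t0, a <= t0 -> is_partition t0 b ts ->
  poly_len dist3 (fun s => P (g s)) t0 ts <= poly_len dist2 g t0 ts.
Proof. intros HA HO. induction ts as [|t ts IH]; simpl; intros t0 Ht0 H. lra.
  destruct H as [H1 H2]. pose proof (part_le _ _ _ H2).
  specialize (IH t ltac:(lra) H2).
  pose proof (HA (g t0) (g t) (HO t0 ltac:(lra)) (HO t ltac:(lra))). lra. Qed.

Lemma poly_lower (P : R2 -> R3) (O : R2 -> Prop) g a b K eta :
  (forall p q, O p -> O q -> dist2 p q - K * (dist2 p q)^2 <= dist3 (P p) (P q)) ->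
  (forall s, a <= s <= b -> O (g s)) -> 0 <= K -> 0 <= eta ->
  forall ts t0, a <= t0 -> is_partition t0 b ts -> close eta g t0 ts ->
  (1 - K * eta) * poly_len dist2 g t0 ts <= poly_len dist3 (fun s => P (g s)) t0 ts.
Proof. intros HB HO HK He. induction ts as [|t ts IH]; simpl; intros t0 Ht0 H Hc. lra.
  destruct H as [H1 H2]. destruct Hc as [Hc1 Hc2]. pose proof (part_le _ _ _ H2).
  specialize (IH t ltac:(lra) H2 Hc2).
  pose proof (HB (g t0) (g t) (HO t0 ltac:(lra)) (HO t ltac:(lra))).
  pose proof (dist2_pos (g t0) (g t)).
  assert (K * dist2 (g t0) (g t) ^ 2 <= K * eta * dist2 (g t0) (g t)).
  { replace (dist2 (g t0) (g t) ^ 2) with (dist2 (g t0) (g t) * dist2 (g t0) (g t)) by ring.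
    assert (0 <= K * dist2 (g t0) (g t)) by (apply Rmult_le_pos; lra).
    assert (K * dist2 (g t0) (g t) * dist2 (g t0) (g t) <= K * dist2 (g t0) (g t) * eta)
      by (apply Rmult_le_compat_l; lra).
    lra. }
  lra. Qed.

Lemma fine_close g a b del eta :
  (forall s s', a <= s <= b -> a <= s' <= b -> Rabs (s - s') < del -> dist2 (g s) (g s') < eta) ->
  forall l t0, a <= t0 -> is_partition t0 b l -> fine del t0 l -> close eta g t0 l.
Proof. intros HU. induction l as [|t l IH]; simpl; intros t0 Ha H F; auto.
  destruct H as [H1 H2]. destruct F as [F1 F2]. pose proof (part_le _ _ _ H2).
  split. apply HU; try lra. unfold Rabs; destruct Rcase_abs; lra.
  apply IH; auto. lra. Qed.

Lemma lp_generic (P : R2 -> R3) (O : R2 -> Prop) (K : R) : 0 < K ->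
  (forall p q, O p -> O q -> dist3 (P p) (P q) <= dist2 p q) ->
  (forall p q, O p -> O q -> dist2 p q - K * (dist2 p q)^2 <= dist3 (P p) (P q)) ->
  length_preserving_on O P.
Proof.
  intros HK HA HB g a b Hab Hc HO. unfold curve_length.
  set (E2 := fun s => exists ts, is_partition a b ts /\ s = poly_len dist2 g a ts).
  set (E3 := fun s => exists ts, is_partition a b ts /\ s = poly_len dist3 (fun s => P (g s)) a ts).
  pose proof (Lub_Rbar_correct E2) as H2. pose proof (Lub_Rbar_correct E3) as H3.
  assert (Hex : exists ts0, is_partition a b ts0).
  { destruct (Rle_lt_or_eq_dec a b Hab) as [Hlt|Heq].
    - exists (b :: nil). simpl. split; auto.
    - exists nil. simpl. auto. }
  destruct Hex as [ts0 Hts0].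
  apply Rbar_le_antisym.
  - apply (proj2 H3). intros x [ts [Hts ->]].
    apply Rbar_le_trans with (Finite (poly_len dist2 g a ts)).
    + simpl. apply (poly_upper P O g a b HA HO ts a (Rle_refl a) Hts).
    + apply (proj1 H2). exists ts; auto.
  - apply (proj2 H2). intros x [ts [Hts ->]].
    destruct (Lub_Rbar E3) as [L| |] eqn:EL.
    + simpl.
      assert (HL : forall y, E3 y -> y <= L).
      { intros y Hy. pose proof (proj1 H3 y Hy). exact H. }
      assert (HL0 : 0 <= L).
      { apply Rle_trans with (poly_len dist3 (fun s => P (g s)) a ts0). apply poly3_nonneg.
        apply HL. exists ts0; auto. }
      set (x := poly_len dist2 g a ts).
      assert (Hx0 : 0 <= x) by apply poly2_nonneg.
      assert (KEY : forall eta, 0 < eta -> K * eta <= 1 -> (1 - K * eta) * x <= L).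
      { intros eta Heta HKe.
        destruct (unif_cont g a b Hab Hc eta Heta) as [del [Hdel HU]].
        destruct (INR_unbounded ((b - a) / del)) as [n Hn].
        assert (Hba : 0 <= (b - a) / del) by (apply Rmult_le_pos; [lra| apply Rlt_le, Rinv_0_lt_compat; lra]).
        assert (Hn0 : (0 < n)%nat).
        { destruct n. simpl in Hn. lra. lia. }
        assert (HIn : 0 < INR n) by (apply lt_0_INR; auto).
        assert (Hmesh : (b - a) / INR n < del).
        { apply (Rmult_lt_reg_r (INR n)); auto. unfold Rdiv. rewrite Rmult_assoc, Rinv_l by lra.
          apply (Rmult_lt_reg_r (/ del)). apply Rinv_0_lt_compat; lra.
          replace (del * INR n * / del) with (INR n) by (field; lra). lra. }
        set (ts' := refine n a ts).
        assert (Hp' : is_partition a b ts') by (apply refine_part; auto).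
        assert (R1 : x <= poly_len dist2 g a ts').
        { apply (refine_ge dist2 g n Hn0 dist2_refl dist2_triang ts a b Hts). }
        assert (Cl : close eta g a ts').
        { apply (fine_close g a b del eta HU ts' a (Rle_refl a) Hp').
          apply (refine_fine n a b del ts Hn0 Hmesh a (Rle_refl a) Hts). }
        pose proof (poly_lower P O g a b K eta HB HO ltac:(lra) ltac:(lra) ts' a (Rle_refl a) Hp' Cl).
        assert (poly_len dist3 (fun s => P (g s)) a ts' <= L) by (apply HL; exists ts'; auto).
        assert ((1 - K * eta) * x <= (1 - K * eta) * poly_len dist2 g a ts') by (apply Rmult_le_compat_l; lra).
        lra. }
      destruct (Rle_dec x L) as [Hle|Hgt]; auto.
      exfalso. assert (Hxp : 0 < x) by lra.
      set (eta := (x - L) / (2 * K * x)).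
      assert (Heta : 0 < eta) by (unfold eta; apply Rdiv_lt_0_compat; nra).
      assert (HKe : K * eta = (x - L) / (2 * x)) by (unfold eta; field; lra).
      assert (K * eta <= 1).
      { rewrite HKe. apply (Rmult_le_reg_r (2*x)). lra. unfold Rdiv. rewrite Rmult_assoc, Rinv_l by lra. lra. }
      specialize (KEY eta Heta H). rewrite HKe in KEY.
      replace ((1 - (x - L) / (2 * x)) * x) with ((x + L)/2) in KEY by (field; lra). lra.
    + simpl. auto.
    + exfalso. pose proof (proj1 H3 (poly_len dist3 (fun s => P (g s)) a ts0)).
      simpl in H. apply H. exists ts0; auto.
Qed.

Lemma hh_neg r s : 0 < r -> s <= 0 -> hh r s = 0.
Proof. intros. unfold hh. rewrite cl_neg, Mx_small by (pose proof PI_gt3; nra). unfold Rdiv; rewrite Rmult_0_l, sin_0. ring. Qed.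
Lemma vv_neg r s : 0 < r -> s <= 0 -> vv r s = 0.
Proof. intros. unfold vv. rewrite cl_neg by auto. unfold Rdiv; rewrite Rmult_0_l, cos_0. ring. Qed.
Lemma hh_mid r s : 0 < r -> 0 <= s <= PI * r -> hh r s = - s + r * sin (s / r).
Proof. intros. unfold hh. rewrite cl_mid, Mx_small by lra. ring. Qed.
Lemma vv_mid r s : 0 < r -> 0 <= s <= PI * r -> vv r s = r * (1 - cos (s / r)).
Proof. intros. unfold vv. rewrite cl_mid by lra. ring. Qed.
Lemma hh_big r s : 0 < r -> PI * r <= s -> hh r s = PI * r - 2 * s.
Proof. intros. unfold hh. rewrite cl_big, Mx_big by lra. replace (PI * r / r) with PI by (field; lra).
  rewrite sin_PI. ring. Qed.
Lemma vv_big r s : 0 < r -> PI * r <= s -> vv r s = 2 * r.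
Proof. intros. unfold vv. rewrite cl_big by lra. replace (PI * r / r) with PI by (field; lra).
  rewrite cos_PI. ring. Qed.

Lemma ordA x y : inrect x y -> 0 <= s2 x y -> 2 <= s1 x y.
Proof. unfold inrect, LL, s1, s2, cc2. pose proof PI_gt3; pose proof PI_le4. lra. Qed.
Lemma ordB x y : inrect x y -> 0 <= s3 x y -> 2 <= s2 x y.
Proof. unfold inrect, LL, s3, s2, cc2. pose proof PI_gt3; pose proof PI_le4. lra. Qed.

Lemma PIr : PI * r1 < 1/2 /\ PI * r2 < 1 /\ PI * r3 < 1/2 /\ 0 < PI * r1 /\ 0 < PI * r2 /\ 0 < PI * r3.
Proof. unfold r1, r2, r3. pose proof PI_gt3; pose proof PI_le4. lra. Qed.

Ltac prep := pose proof r_pos as [Hr1 [Hr2 Hr3]]; pose proof PIr as [Q1 [Q2 [Q3 [Q4 [Q5 Q6]]]]].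

Lemma reg_A x y : inrect x y -> s1 x y <= 0 ->
  PhiX x y = x /\ PhiY x y = y /\ PhiZ x y = 0.
Proof. intros H Hs. prep.
  assert (s2 x y < 0). { destruct (Rlt_le_dec (s2 x y) 0); auto. pose proof (ordA x y H r). lra. }
  assert (s3 x y < 0). { destruct (Rlt_le_dec (s3 x y) 0); auto. pose proof (ordB x y H r). lra. }
  unfold PhiX, PhiY, PhiZ.
  rewrite (hh_neg r1 (s1 x y)), (hh_neg r2 (s2 x y)), (hh_neg r3 (s3 x y)),
    (vv_neg r1 (s1 x y)), (vv_neg r2 (s2 x y)), (vv_neg r3 (s3 x y)) by lra.
  repeat split; ring. Qed.

Lemma reg_C1 x y : inrect x y -> 0 <= s1 x y <= PI * r1 ->
  PhiX x y = x + 4/5 * (- s1 x y + r1 * sin (s1 x y / r1)) /\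
  PhiY x y = y - 3/5 * (- s1 x y + r1 * sin (s1 x y / r1)) /\
  PhiZ x y = r1 * (1 - cos (s1 x y / r1)).
Proof. intros H Hs. prep.
  assert (s2 x y < 0). { destruct (Rlt_le_dec (s2 x y) 0); auto. pose proof (ordA x y H r). lra. }
  assert (s3 x y < 0). { destruct (Rlt_le_dec (s3 x y) 0); auto. pose proof (ordB x y H r). lra. }
  unfold PhiX, PhiY, PhiZ.
  rewrite (hh_mid r1 (s1 x y)), (hh_neg r2 (s2 x y)), (hh_neg r3 (s3 x y)),
    (vv_mid r1 (s1 x y)), (vv_neg r2 (s2 x y)), (vv_neg r3 (s3 x y)) by lra.
  repeat split; ring. Qed.

Lemma reg_P1 x y : inrect x y -> PI * r1 <= s1 x y -> s2 x y <= 0 ->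
  PhiX x y = x + 4/5 * (PI * r1 - 2 * s1 x y) /\
  PhiY x y = y - 3/5 * (PI * r1 - 2 * s1 x y) /\
  PhiZ x y = 2 * r1.
Proof. intros H Hs Hs2. prep.
  assert (s3 x y < 0). { destruct (Rlt_le_dec (s3 x y) 0); auto. pose proof (ordB x y H r). lra. }
  unfold PhiX, PhiY, PhiZ.
  rewrite (hh_big r1 (s1 x y)), (hh_neg r2 (s2 x y)), (hh_neg r3 (s3 x y)),
    (vv_big r1 (s1 x y)), (vv_neg r2 (s2 x y)), (vv_neg r3 (s3 x y)) by lra.
  repeat split; ring. Qed.

Lemma reg_C2 x y : inrect x y -> 0 <= s2 x y <= PI * r2 ->
  PhiX x y = x + 4/5 * (PI * r1 - 2 * s1 x y) /\
  PhiY x y = y - 3/5 * (PI * r1 - 2 * s1 x y) + (- s2 x y + r2 * sin (s2 x y / r2)) /\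
  PhiZ x y = 2 * r1 - r2 * (1 - cos (s2 x y / r2)).
Proof. intros H Hs. prep.
  pose proof (ordA x y H ltac:(lra)).
  assert (s3 x y < 0). { destruct (Rlt_le_dec (s3 x y) 0); auto. pose proof (ordB x y H r). lra. }
  unfold PhiX, PhiY, PhiZ.
  rewrite (hh_big r1 (s1 x y)), (hh_mid r2 (s2 x y)), (hh_neg r3 (s3 x y)),
    (vv_big r1 (s1 x y)), (vv_mid r2 (s2 x y)), (vv_neg r3 (s3 x y)) by lra.
  repeat split; ring. Qed.

Lemma reg_P2 x y : inrect x y -> PI * r2 <= s2 x y -> s3 x y <= 0 ->
  PhiX x y = x + 4/5 * (PI * r1 - 2 * s1 x y) /\
  PhiY x y = y - 3/5 * (PI * r1 - 2 * s1 x y) + (PI * r2 - 2 * s2 x y) /\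
  PhiZ x y = 2 * r1 - 2 * r2.
Proof. intros H Hs Hs3. prep.
  pose proof (ordA x y H ltac:(lra)).
  unfold PhiX, PhiY, PhiZ.
  rewrite (hh_big r1 (s1 x y)), (hh_big r2 (s2 x y)), (hh_neg r3 (s3 x y)),
    (vv_big r1 (s1 x y)), (vv_big r2 (s2 x y)), (vv_neg r3 (s3 x y)) by lra.
  repeat split; ring. Qed.

Lemma reg_C3 x y : inrect x y -> 0 <= s3 x y <= PI * r3 ->
  PhiX x y = x + 4/5 * (PI * r1 - 2 * s1 x y) - 4/5 * (- s3 x y + r3 * sin (s3 x y / r3)) /\
  PhiY x y = y - 3/5 * (PI * r1 - 2 * s1 x y) + (PI * r2 - 2 * s2 x y) - 3/5 * (- s3 x y + r3 * sin (s3 x y / r3)) /\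
  PhiZ x y = 2 * r1 - 2 * r2 + r3 * (1 - cos (s3 x y / r3)).
Proof. intros H Hs. prep.
  pose proof (ordB x y H ltac:(lra)). pose proof (ordA x y H ltac:(lra)).
  unfold PhiX, PhiY, PhiZ.
  rewrite (hh_big r1 (s1 x y)), (hh_big r2 (s2 x y)), (hh_mid r3 (s3 x y)),
    (vv_big r1 (s1 x y)), (vv_big r2 (s2 x y)), (vv_mid r3 (s3 x y)) by lra.
  repeat split; ring. Qed.

Lemma reg_B x y : inrect x y -> PI * r3 <= s3 x y ->
  PhiX x y = x - LL /\ PhiY x y = - y /\ PhiZ x y = 0.
Proof. intros H Hs. prep.
  pose proof (ordB x y H ltac:(lra)). pose proof (ordA x y H ltac:(lra)).
  unfold PhiX, PhiY, PhiZ.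
  rewrite (hh_big r1 (s1 x y)), (hh_big r2 (s2 x y)), (hh_big r3 (s3 x y)),
    (vv_big r1 (s1 x y)), (vv_big r2 (s2 x y)), (vv_big r3 (s3 x y)) by lra.
  unfold s1, s2, s3, cc2, r1, r2, r3, LL. repeat split; field. Qed.

Lemma cos_strict t : 0 < t < PI -> -1 < cos t < 1.
Proof. intros Ht. pose proof (COS_bound t). split.
  - destruct (Req_dec (cos t) (-1)). rewrite <- cos_PI in H0. apply cos_inj in H0; lra. lra.
  - destruct (Req_dec (cos t) 1). rewrite <- cos_0 in H0. apply cos_inj in H0; lra. lra.
Qed.

Lemma ang_range r s : 0 < r -> 0 < s < PI * r -> 0 < s / r < PI.
Proof. intros Hr Hs. split. apply Rdiv_lt_0_compat; lra.
  apply (Rmult_lt_reg_r r); auto. unfold Rdiv; rewrite Rmult_assoc, Rinv_l by lra. lra. Qed.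

Lemma regions x y : inrect x y ->
  s1 x y <= 0 \/ (0 < s1 x y < PI * r1) \/ (PI * r1 <= s1 x y /\ s2 x y <= 0) \/
  (0 < s2 x y < PI * r2) \/ (PI * r2 <= s2 x y /\ s3 x y <= 0) \/ (0 < s3 x y < PI * r3) \/
  PI * r3 <= s3 x y.
Proof. intros H. prep.
  destruct (Rle_dec (s1 x y) 0). left; auto.
  destruct (Rlt_dec (s1 x y) (PI*r1)). right; left; lra.
  destruct (Rle_dec (s2 x y) 0). right; right; left; lra.
  destruct (Rlt_dec (s2 x y) (PI*r2)). do 3 right; left; lra.
  destruct (Rle_dec (s3 x y) 0). do 4 right; left; lra.
  destruct (Rlt_dec (s3 x y) (PI*r3)). do 5 right; left; lra.
  do 6 right; lra. Qed.

Lemma infoC1 x y : inrect x y -> 0 < s1 x y < PI * r1 -> 0 < PhiZ x y < 1/5 /\ PhiY x y <= 2.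
Proof. intros H Hs. prep. destruct (reg_C1 x y H ltac:(lra)) as [EX [EY EZ]].
  pose proof (ang_range r1 (s1 x y) Hr1 Hs). pose proof (cos_strict _ H0).
  assert (0 <= sin (s1 x y / r1)) by (apply sin_ge_0; lra).
  rewrite EY, EZ. unfold inrect in H. unfold r1 in *. split. split; nra. nra. Qed.

Lemma infoC2 x y : inrect x y -> 0 < s2 x y < PI * r2 -> -1/5 < PhiZ x y < 1/5 /\ 5 <= PhiY x y.
Proof. intros H Hs. prep. destruct (reg_C2 x y H ltac:(lra)) as [EX [EY EZ]].
  pose proof (ang_range r2 (s2 x y) Hr2 Hs). pose proof (cos_strict _ H0).
  assert (0 <= sin (s2 x y / r2)) by (apply sin_ge_0; lra).
  rewrite EY, EZ. unfold inrect in H. pose proof PI_le4.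
  unfold s1, s2, cc2, r1, r2 in *. split. split; nra. nra. Qed.

Lemma infoC3 x y : inrect x y -> 0 < s3 x y < PI * r3 -> -1/5 < PhiZ x y < 0 /\ PhiY x y <= 2.
Proof. intros H Hs. prep. destruct (reg_C3 x y H ltac:(lra)) as [EX [EY EZ]].
  pose proof (ang_range r3 (s3 x y) Hr3 Hs). pose proof (cos_strict _ H0).
  assert (0 <= sin (s3 x y / r3)) by (apply sin_ge_0; lra).
  rewrite EY, EZ. unfold inrect in H. pose proof PI_le4.
  unfold s1, s2, s3, cc2, r1, r2, r3 in *. split. split; nra. nra. Qed.

Lemma injC1 x y x' y' : inrect x y -> inrect x' y' -> 0 < s1 x y < PI * r1 -> 0 < s1 x' y' < PI * r1 ->
  PhiX x y = PhiX x' y' -> PhiY x y = PhiY x' y' -> PhiZ x y = PhiZ x' y' -> x = x' /\ y = y'.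
Proof. intros H H' Hs Hs' EX EY EZ. prep.
  destruct (reg_C1 x y H ltac:(lra)) as [X1 [Y1 Z1]]. destruct (reg_C1 x' y' H' ltac:(lra)) as [X2 [Y2 Z2]].
  rewrite Z1, Z2 in EZ.
  assert (cos (s1 x y / r1) = cos (s1 x' y' / r1)) by (apply (Rmult_eq_reg_l r1); lra).
  pose proof (ang_range r1 _ Hr1 Hs). pose proof (ang_range r1 _ Hr1 Hs').
  apply cos_inj in H0; try lra.
  assert (E : s1 x y = s1 x' y') by (apply (Rmult_eq_reg_r (/r1)); [exact H0| apply Rinv_neq_0_compat; lra]).
  rewrite X1, X2, E in EX. rewrite Y1, Y2, E in EY. unfold s1 in E. split; lra. Qed.

Lemma injC2 x y x' y' : inrect x y -> inrect x' y' -> 0 < s2 x y < PI * r2 -> 0 < s2 x' y' < PI * r2 ->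
  PhiX x y = PhiX x' y' -> PhiY x y = PhiY x' y' -> PhiZ x y = PhiZ x' y' -> x = x' /\ y = y'.
Proof. intros H H' Hs Hs' EX EY EZ. prep.
  destruct (reg_C2 x y H ltac:(lra)) as [X1 [Y1 Z1]]. destruct (reg_C2 x' y' H' ltac:(lra)) as [X2 [Y2 Z2]].
  rewrite Z1, Z2 in EZ.
  assert (cos (s2 x y / r2) = cos (s2 x' y' / r2)) by (apply (Rmult_eq_reg_l r2); lra).
  pose proof (ang_range r2 _ Hr2 Hs). pose proof (ang_range r2 _ Hr2 Hs').
  apply cos_inj in H0; try lra.
  assert (E : s2 x y = s2 x' y') by (apply (Rmult_eq_reg_r (/r2)); [exact H0| apply Rinv_neq_0_compat; lra]).
  rewrite X1, X2 in EX. unfold s1, s2 in E, EX. split; lra. Qed.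

Lemma injC3 x y x' y' : inrect x y -> inrect x' y' -> 0 < s3 x y < PI * r3 -> 0 < s3 x' y' < PI * r3 ->
  PhiX x y = PhiX x' y' -> PhiY x y = PhiY x' y' -> PhiZ x y = PhiZ x' y' -> x = x' /\ y = y'.
Proof. intros H H' Hs Hs' EX EY EZ. prep.
  destruct (reg_C3 x y H ltac:(lra)) as [X1 [Y1 Z1]]. destruct (reg_C3 x' y' H' ltac:(lra)) as [X2 [Y2 Z2]].
  rewrite Z1, Z2 in EZ.
  assert (cos (s3 x y / r3) = cos (s3 x' y' / r3)) by (apply (Rmult_eq_reg_l r3); lra).
  pose proof (ang_range r3 _ Hr3 Hs). pose proof (ang_range r3 _ Hr3 Hs').
  apply cos_inj in H0; try lra.
  assert (E : s3 x y = s3 x' y') by (apply (Rmult_eq_reg_r (/r3)); [exact H0| apply Rinv_neq_0_compat; lra]).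
  rewrite X1, X2, E in EX. unfold s1, s3 in E, EX. split; lra. Qed.

Ltac info_of x y H :=
  let R := fresh "R" in
  destruct (regions x y H) as [R|[R|[R|[R|[R|[R|R]]]]]];
  [ pose proof (reg_A x y H R)
  | pose proof (infoC1 x y H R)
  | pose proof (reg_P1 x y H (proj1 R) (proj2 R))
  | pose proof (infoC2 x y H R)
  | pose proof (reg_P2 x y H (proj1 R) (proj2 R))
  | pose proof (infoC3 x y H R)
  | pose proof (reg_B x y H R) ].

Lemma Phi_inj x y x' y' : inrect x y -> inrect x' y' ->
  PhiX x y = PhiX x' y' -> PhiY x y = PhiY x' y' -> PhiZ x y = PhiZ x' y' ->
  (x = x' /\ y = y') \/ (x = 0 /\ x' = LL /\ y' = - y) \/ (x' = 0 /\ x = LL /\ y = - y').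
Proof.
  intros H H' EX EY EZ.
  destruct (regions x y H) as [R|[R|[R|[R|[R|[R|R]]]]]];
  destruct (regions x' y' H') as [R'|[R'|[R'|[R'|[R'|[R'|R']]]]]];
  try (left; apply injC1; auto; fail);
  try (left; apply injC2; auto; fail);
  try (left; apply injC3; auto; fail);
  pose proof PIr as [Q1 [Q2 [Q3 [Q4 [Q5 Q6]]]]];
  unfold inrect in H, H'; unfold r1, r2, r3 in *;
  first
   [ pose proof (reg_A x y H R) | pose proof (infoC1 x y H R)
   | pose proof (reg_P1 x y H (proj1 R) (proj2 R)) | pose proof (infoC2 x y H R)
   | pose proof (reg_P2 x y H (proj1 R) (proj2 R)) | pose proof (infoC3 x y H R)
   | pose proof (reg_B x y H R) ];
  first
   [ pose proof (reg_A x' y' H' R') | pose proof (infoC1 x' y' H' R')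
   | pose proof (reg_P1 x' y' H' (proj1 R') (proj2 R')) | pose proof (infoC2 x' y' H' R')
   | pose proof (reg_P2 x' y' H' (proj1 R') (proj2 R')) | pose proof (infoC3 x' y' H' R')
   | pose proof (reg_B x' y' H' R') ];
  unfold s1, s2, s3, cc2, LL, r1, r2, r3 in *;
  first [ exfalso; lra | left; split; lra | right; left; repeat split; lra | right; right; repeat split; lra ].
Qed.

Definition tf (A B C E G al be ga : R) (x y : R) : R :=
  A + B*x + C*y + E * sin (al*x + be*y + ga) + G * cos (al*x + be*y + ga).

Lemma tf_dx A B C E G al be ga x y :
  is_derive (fun t => tf A B C E G al be ga t y) x (tf B 0 0 (-(G*al)) (E*al) al be ga x y).
Proof. unfold tf. auto_derive; auto. ring. Qed.
Lemma tf_dy A B C E G al be ga x y :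
  is_derive (fun t => tf A B C E G al be ga x t) y (tf C 0 0 (-(G*be)) (E*be) al be ga x y).
Proof. unfold tf. auto_derive; auto. ring. Qed.

Lemma ip_tf al be ga ds : forall A B C E G, exists A' B' C' E' G',
  forall x y, ipderiv ds (tf A B C E G al be ga) x y = tf A' B' C' E' G' al be ga x y.
Proof.
  induction ds as [|d ds IH]; intros A B C E G.
  - exists A, B, C, E, G. intros; reflexivity.
  - destruct (IH A B C E G) as [A' [B' [C' [E' [G' H]]]]].
    destruct d; simpl.
    + exists B', 0, 0, (-(G'*al)), (E'*al). intros x y.
      rewrite (Derive_ext _ (fun t => tf A' B' C' E' G' al be ga t y)) by (intros; apply H).
      apply is_derive_unique. apply tf_dx.
    + exists C', 0, 0, (-(G'*be)), (E'*be). intros x y.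
      rewrite (Derive_ext _ (fun t => tf A' B' C' E' G' al be ga x t)) by (intros; apply H).
      apply is_derive_unique. apply tf_dy.
Qed.

Lemma tf_cont A B C E G al be ga x y : continuous2_at (tf A B C E G al be ga) x y.
Proof.
  intros eps Heps.
  pose proof (Rabs_pos B); pose proof (Rabs_pos C);
  pose proof (Rabs_pos E); pose proof (Rabs_pos G); pose proof (Rabs_pos al); pose proof (Rabs_pos be).
  remember (Rabs B + Rabs C + (Rabs E + Rabs G) * (Rabs al + Rabs be) + 1) as K eqn:HKdef.
  assert (HK : 0 < K) by (subst K; nra).
  remember (eps / (2*K)) as d eqn:Hddef.
  assert (Hd : 0 < d) by (subst d; apply Rdiv_lt_0_compat; lra).
  exists d. split. exact Hd.
  intros x' y' Hx Hy. unfold tf.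
  remember (al*x' + be*y' + ga) as u' eqn:Hu'. remember (al*x + be*y + ga) as u eqn:Hu0.
  assert (Hu : Rabs (u' - u) <= (Rabs al + Rabs be) * d).
  { subst u u'. replace (al * x' + be * y' + ga - (al * x + be * y + ga)) with (al*(x'-x) + be*(y'-y)) by ring.
    eapply Rle_trans. apply Rabs_triang. rewrite !Rabs_mult. nra. }
  pose proof (sin_lip u' u). pose proof (cos_lip u' u).
  replace (A + B * x' + C * y' + E * sin u' + G * cos u' - (A + B * x + C * y + E * sin u + G * cos u))
    with (B * (x'-x) + C * (y'-y) + E * (sin u' - sin u) + G * (cos u' - cos u)) by ring.
  assert (T : Rabs (B * (x' - x) + C * (y' - y) + E * (sin u' - sin u) + G * (cos u' - cos u))
     <= Rabs B * d + Rabs C * d + Rabs E * ((Rabs al + Rabs be) * d) + Rabs G * ((Rabs al + Rabs be) * d)).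
  { eapply Rle_trans. apply Rabs_triang. eapply Rle_trans. apply Rplus_le_compat_r. apply Rabs_triang.
    eapply Rle_trans. apply Rplus_le_compat_r. apply Rplus_le_compat_r. apply Rabs_triang.
    rewrite !Rabs_mult.
    pose proof (Rabs_pos (x'-x)); pose proof (Rabs_pos (y'-y)).
    apply Rplus_le_compat. apply Rplus_le_compat. apply Rplus_le_compat.
    apply Rmult_le_compat_l; lra. apply Rmult_le_compat_l; lra.
    apply Rmult_le_compat_l; lra. apply Rmult_le_compat_l; lra. }
  assert (Rabs B * d + Rabs C * d + Rabs E * ((Rabs al + Rabs be) * d) + Rabs G * ((Rabs al + Rabs be) * d)
          = (K - 1) * d) by (subst K; ring).
  assert ((K - 1) * d < eps).
  { subst d. replace ((K - 1) * (eps / (2 * K))) with (eps/2 - eps/(2*K)) by (field; lra).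
    assert (0 < eps / (2*K)) by (apply Rdiv_lt_0_compat; lra). lra. }
  lra.
Qed.

Definition box (px py e x y : R) : Prop := Rabs (x - px) < e /\ Rabs (y - py) < e.

Lemma ip_local (f g : R -> R -> R) px py e :
  (forall x y, box px py e x y -> f x y = g x y) ->
  forall ds x y, box px py e x y -> ipderiv ds f x y = ipderiv ds g x y.
Proof.
  intros Hfg ds. induction ds as [|d ds IH]; intros x y Hb; simpl.
  - apply Hfg; auto.
  - destruct Hb as [Hx Hy]. destruct d; simpl.
    + apply Derive_ext_loc.
      apply (loc_R _ _ (e - Rabs (x - px))). lra.
      intros t Ht. apply IH. split; auto.
      unfold Rabs in *; repeat destruct Rcase_abs; lra.
    + apply Derive_ext_loc.
      apply (loc_R _ _ (e - Rabs (y - py))). lra.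
      intros t Ht. apply IH. split; auto.
      unfold Rabs in *; repeat destruct Rcase_abs; lra.
Qed.

Lemma smooth_local (U : R2 -> Prop) (f : R -> R -> R) :
  (forall x y, U (x, y) -> exists e A B C E G al be ga, 0 < e /\
      forall x' y', box x y e x' y' -> f x' y' = tf A B C E G al be ga x' y') ->
  smooth_on U f.
Proof.
  intros H ds x y HU.
  destruct (H x y HU) as [e [A [B [C [E [G [al [be [ga [He Hf]]]]]]]]]].
  destruct (ip_tf al be ga ds A B C E G) as [A' [B' [C' [E' [G' Hip]]]]].
  pose proof (ip_local f (tf A B C E G al be ga) x y e Hf ds) as Hl.
  assert (Hc : box x y e x y) by (unfold box; rewrite !Rminus_eq_0, !Rabs_R0; split; lra).
  repeat split.
  - apply (ex_derive_ext_loc (fun t => tf A' B' C' E' G' al be ga t y)).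
    + apply (loc_R _ _ e He). intros t Ht. rewrite Hl, Hip; auto. split; auto.
      rewrite Rminus_eq_0, Rabs_R0; lra.
    + eexists. apply tf_dx.
  - apply (ex_derive_ext_loc (fun t => tf A' B' C' E' G' al be ga x t)).
    + apply (loc_R _ _ e He). intros t Ht. rewrite Hl, Hip; auto. split; auto.
      rewrite Rminus_eq_0, Rabs_R0; lra.
    + eexists. apply tf_dy.
  - intros eps Heps. destruct (tf_cont A' B' C' E' G' al be ga x y eps Heps) as [d [Hd Hdd]].
    exists (Rmin d e). split. apply Rmin_pos; lra.
    intros x' y' Hx Hy. pose proof (Rmin_l d e). pose proof (Rmin_r d e).
    rewrite (Hl x' y'), (Hl x y), !Hip; auto. apply Hdd; lra. split; lra.
Qed.

Lemma interior_box (D : R2 -> Prop) x y : interior2 D (x, y) ->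
  exists e, 0 < e /\ forall x' y', box x y e x' y' -> D (x', y').
Proof. intros [r [Hr H]]. exists (r/2). split. lra. intros x' y' [Hx Hy]. apply H.
  eapply Rle_lt_trans. apply dist2_le_sum. simpl. lra. Qed.

Lemma smooth_region (D : R2 -> Prop) (f : R -> R -> R) A B C E G al be ga :
  (forall x y, D (x,y) -> f x y = tf A B C E G al be ga x y) -> smooth_on (interior2 D) f.
Proof. intros HD. apply smooth_local. intros x y HU.
  destruct (interior_box D x y HU) as [e [He Hb]].
  exists e, A, B, C, E, G, al, be, ga. split; auto. Qed.

Definition orect (p : R2) : Prop := open_rect LL BB p.
Lemma orect_in x y : orect (x, y) -> inrect x y.
Proof. unfold orect, open_rect, inrect, LL, BB; simpl. intros [[? ?] [? ?]]. split; split; lra. Qed.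
Lemma rect_in x y : rect LL BB (x, y) -> inrect x y.
Proof. unfold rect, inrect, LL, BB; simpl. intros [[? ?] [? ?]]. split; split; lra. Qed.

Definition DA (p : R2) := orect p /\ s1 (fst p) (snd p) <= 0.
Definition DC1 (p : R2) := orect p /\ 0 <= s1 (fst p) (snd p) <= PI * r1.
Definition DP1 (p : R2) := orect p /\ PI * r1 <= s1 (fst p) (snd p) /\ s2 (fst p) (snd p) <= 0.
Definition DC2 (p : R2) := orect p /\ 0 <= s2 (fst p) (snd p) <= PI * r2.
Definition DP2 (p : R2) := orect p /\ PI * r2 <= s2 (fst p) (snd p) /\ s3 (fst p) (snd p) <= 0.
Definition DC3 (p : R2) := orect p /\ 0 <= s3 (fst p) (snd p) <= PI * r3.
Definition DB (p : R2) := orect p /\ PI * r3 <= s3 (fst p) (snd p).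

Ltac tfsolve := unfold tf; try ring.

Lemma smA : smooth_map_on (interior2 DA) Phi.
Proof. unfold smooth_map_on. split; [|split].
  - apply (smooth_region _ _ 0 1 0 0 0 0 0 0). intros x y [Ho Hs]. cbn [fst snd] in *; change (Defs.c1 (Phi (x,y))) with (PhiX x y); change (Defs.c2 (Phi (x,y))) with (PhiY x y); change (Defs.c3 (Phi (x,y))) with (PhiZ x y).
    destruct (reg_A x y (orect_in x y Ho) Hs) as [E1 [E2 E3]]. rewrite E1. tfsolve.
  - apply (smooth_region _ _ 0 0 1 0 0 0 0 0). intros x y [Ho Hs]. cbn [fst snd] in *; change (Defs.c1 (Phi (x,y))) with (PhiX x y); change (Defs.c2 (Phi (x,y))) with (PhiY x y); change (Defs.c3 (Phi (x,y))) with (PhiZ x y).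
    destruct (reg_A x y (orect_in x y Ho) Hs) as [E1 [E2 E3]]. rewrite E2. tfsolve.
  - apply (smooth_region _ _ 0 0 0 0 0 0 0 0). intros x y [Ho Hs]. cbn [fst snd] in *; change (Defs.c1 (Phi (x,y))) with (PhiX x y); change (Defs.c2 (Phi (x,y))) with (PhiY x y); change (Defs.c3 (Phi (x,y))) with (PhiZ x y).
    destruct (reg_A x y (orect_in x y Ho) Hs) as [E1 [E2 E3]]. rewrite E3. tfsolve.
Qed.

Lemma smC1 : smooth_map_on (interior2 DC1) Phi.
Proof. unfold smooth_map_on. split; [|split].
  - apply (smooth_region _ _ (4/5) (9/25) (12/25) (2/25) 0 8 (-6) (-10)). intros x y [Ho Hs]. cbn [fst snd] in *; change (Defs.c1 (Phi (x,y))) with (PhiX x y); change (Defs.c2 (Phi (x,y))) with (PhiY x y); change (Defs.c3 (Phi (x,y))) with (PhiZ x y).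
    destruct (reg_C1 x y (orect_in x y Ho) Hs) as [E1 [E2 E3]]. rewrite E1. unfold tf.
    replace (8 * x + -6 * y + -10) with (s1 x y / r1) by (unfold s1, r1; field). unfold s1, r1. lra.
  - apply (smooth_region _ _ (-3/5) (12/25) (16/25) (-3/50) 0 8 (-6) (-10)). intros x y [Ho Hs]. cbn [fst snd] in *; change (Defs.c1 (Phi (x,y))) with (PhiX x y); change (Defs.c2 (Phi (x,y))) with (PhiY x y); change (Defs.c3 (Phi (x,y))) with (PhiZ x y).
    destruct (reg_C1 x y (orect_in x y Ho) Hs) as [E1 [E2 E3]]. rewrite E2. unfold tf.
    replace (8 * x + -6 * y + -10) with (s1 x y / r1) by (unfold s1, r1; field). unfold s1, r1. lra.
  - apply (smooth_region _ _ (1/10) 0 0 0 (-1/10) 8 (-6) (-10)). intros x y [Ho Hs]. cbn [fst snd] in *; change (Defs.c1 (Phi (x,y))) with (PhiX x y); change (Defs.c2 (Phi (x,y))) with (PhiY x y); change (Defs.c3 (Phi (x,y))) with (PhiZ x y).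
    destruct (reg_C1 x y (orect_in x y Ho) Hs) as [E1 [E2 E3]]. rewrite E3. unfold tf.
    replace (8 * x + -6 * y + -10) with (s1 x y / r1) by (unfold s1, r1; field). unfold s1, r1. lra.
Qed.

Lemma smP1 : smooth_map_on (interior2 DP1) Phi.
Proof. unfold smooth_map_on. split; [|split].
  - apply (smooth_region _ _ (8/5 + 2/25 * PI) (-7/25) (24/25) 0 0 0 0 0). intros x y [Ho [Hs Hs']]. cbn [fst snd] in *; change (Defs.c1 (Phi (x,y))) with (PhiX x y); change (Defs.c2 (Phi (x,y))) with (PhiY x y); change (Defs.c3 (Phi (x,y))) with (PhiZ x y).
    destruct (reg_P1 x y (orect_in x y Ho) Hs Hs') as [E1 [E2 E3]]. rewrite E1. unfold tf, s1, r1. lra.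
  - apply (smooth_region _ _ (-6/5 - 3/50 * PI) (24/25) (7/25) 0 0 0 0 0). intros x y [Ho [Hs Hs']]. cbn [fst snd] in *; change (Defs.c1 (Phi (x,y))) with (PhiX x y); change (Defs.c2 (Phi (x,y))) with (PhiY x y); change (Defs.c3 (Phi (x,y))) with (PhiZ x y).
    destruct (reg_P1 x y (orect_in x y Ho) Hs Hs') as [E1 [E2 E3]]. rewrite E2. unfold tf, s1, r1. lra.
  - apply (smooth_region _ _ (1/5) 0 0 0 0 0 0 0). intros x y [Ho [Hs Hs']]. cbn [fst snd] in *; change (Defs.c1 (Phi (x,y))) with (PhiX x y); change (Defs.c2 (Phi (x,y))) with (PhiY x y); change (Defs.c3 (Phi (x,y))) with (PhiZ x y).
    destruct (reg_P1 x y (orect_in x y Ho) Hs Hs') as [E1 [E2 E3]]. rewrite E3. unfold tf, s1, r1. lra.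
Qed.

Lemma smC2 : smooth_map_on (interior2 DC2) Phi.
Proof. unfold smooth_map_on. split; [|split].
  - apply (smooth_region _ _ (8/5 + 2/25 * PI) (-7/25) (24/25) 0 0 0 0 0). intros x y [Ho Hs]. cbn [fst snd] in *; change (Defs.c1 (Phi (x,y))) with (PhiX x y); change (Defs.c2 (Phi (x,y))) with (PhiY x y); change (Defs.c3 (Phi (x,y))) with (PhiZ x y).
    destruct (reg_C2 x y (orect_in x y Ho) Hs) as [E1 [E2 E3]]. rewrite E1. unfold tf, s1, r1. lra.
  - apply (smooth_region _ _ (27/5 - 1/10 * PI) 0 0 (1/5) 0 (24/5) (7/5) (-33 + PI/5)). intros x y [Ho Hs]. cbn [fst snd] in *; change (Defs.c1 (Phi (x,y))) with (PhiX x y); change (Defs.c2 (Phi (x,y))) with (PhiY x y); change (Defs.c3 (Phi (x,y))) with (PhiZ x y).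
    destruct (reg_C2 x y (orect_in x y Ho) Hs) as [E1 [E2 E3]]. rewrite E2. unfold tf.
    replace (24/5 * x + 7/5 * y + (-33 + PI/5)) with (s2 x y / r2) by (unfold s2, cc2, r2; field).
    unfold s1, s2, cc2, r1, r2. lra.
  - apply (smooth_region _ _ 0 0 0 0 (1/5) (24/5) (7/5) (-33 + PI/5)). intros x y [Ho Hs]. cbn [fst snd] in *; change (Defs.c1 (Phi (x,y))) with (PhiX x y); change (Defs.c2 (Phi (x,y))) with (PhiY x y); change (Defs.c3 (Phi (x,y))) with (PhiZ x y).
    destruct (reg_C2 x y (orect_in x y Ho) Hs) as [E1 [E2 E3]]. rewrite E3. unfold tf.
    replace (24/5 * x + 7/5 * y + (-33 + PI/5)) with (s2 x y / r2) by (unfold s2, cc2, r2; field).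
    unfold r1, r2. lra.
Qed.

Lemma smP2 : smooth_map_on (interior2 DP2) Phi.
Proof. unfold smooth_map_on. split; [|split].
  - apply (smooth_region _ _ (8/5 + 2/25 * PI) (-7/25) (24/25) 0 0 0 0 0). intros x y [Ho [Hs Hs']]. cbn [fst snd] in *; change (Defs.c1 (Phi (x,y))) with (PhiX x y); change (Defs.c2 (Phi (x,y))) with (PhiY x y); change (Defs.c3 (Phi (x,y))) with (PhiZ x y).
    destruct (reg_P2 x y (orect_in x y Ho) Hs Hs') as [E1 [E2 E3]]. rewrite E1. unfold tf, s1, r1. lra.
  - apply (smooth_region _ _ (12 + 3/50 * PI) (-24/25) (-7/25) 0 0 0 0 0). intros x y [Ho [Hs Hs']]. cbn [fst snd] in *; change (Defs.c1 (Phi (x,y))) with (PhiX x y); change (Defs.c2 (Phi (x,y))) with (PhiY x y); change (Defs.c3 (Phi (x,y))) with (PhiZ x y).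
    destruct (reg_P2 x y (orect_in x y Ho) Hs Hs') as [E1 [E2 E3]]. rewrite E2. unfold tf, s1, s2, cc2, r1, r2. lra.
  - apply (smooth_region _ _ (-1/5) 0 0 0 0 0 0 0). intros x y [Ho [Hs Hs']]. cbn [fst snd] in *; change (Defs.c1 (Phi (x,y))) with (PhiX x y); change (Defs.c2 (Phi (x,y))) with (PhiY x y); change (Defs.c3 (Phi (x,y))) with (PhiZ x y).
    destruct (reg_P2 x y (orect_in x y Ho) Hs Hs') as [E1 [E2 E3]]. rewrite E3. unfold tf, r1, r2. lra.
Qed.

Lemma smC3 : smooth_map_on (interior2 DC3) Phi.
Proof. unfold smooth_map_on. split; [|split].
  - apply (smooth_region _ _ (-32/5 + 2/25 * PI) (9/25) (12/25) (-2/25) 0 8 (-6) (-100)). intros x y [Ho Hs]. cbn [fst snd] in *; change (Defs.c1 (Phi (x,y))) with (PhiX x y); change (Defs.c2 (Phi (x,y))) with (PhiY x y); change (Defs.c3 (Phi (x,y))) with (PhiZ x y).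
    destruct (reg_C3 x y (orect_in x y Ho) Hs) as [E1 [E2 E3]]. rewrite E1. unfold tf.
    replace (8 * x + -6 * y + -100) with (s3 x y / r3) by (unfold s3, r3; field). unfold s1, s3, r1, r3. lra.
  - apply (smooth_region _ _ (6 + 3/50 * PI) (-12/25) (-16/25) (-3/50) 0 8 (-6) (-100)). intros x y [Ho Hs]. cbn [fst snd] in *; change (Defs.c1 (Phi (x,y))) with (PhiX x y); change (Defs.c2 (Phi (x,y))) with (PhiY x y); change (Defs.c3 (Phi (x,y))) with (PhiZ x y).
    destruct (reg_C3 x y (orect_in x y Ho) Hs) as [E1 [E2 E3]]. rewrite E2. unfold tf.
    replace (8 * x + -6 * y + -100) with (s3 x y / r3) by (unfold s3, r3; field). unfold s1, s2, s3, cc2, r1, r2, r3. lra.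
  - apply (smooth_region _ _ (-1/10) 0 0 0 (-1/10) 8 (-6) (-100)). intros x y [Ho Hs]. cbn [fst snd] in *; change (Defs.c1 (Phi (x,y))) with (PhiX x y); change (Defs.c2 (Phi (x,y))) with (PhiY x y); change (Defs.c3 (Phi (x,y))) with (PhiZ x y).
    destruct (reg_C3 x y (orect_in x y Ho) Hs) as [E1 [E2 E3]]. rewrite E3. unfold tf.
    replace (8 * x + -6 * y + -100) with (s3 x y / r3) by (unfold s3, r3; field). unfold r1, r2, r3. lra.
Qed.

Lemma smB : smooth_map_on (interior2 DB) Phi.
Proof. unfold smooth_map_on. split; [|split].
  - apply (smooth_region _ _ (-72/5) 1 0 0 0 0 0 0). intros x y [Ho Hs]. cbn [fst snd] in *; change (Defs.c1 (Phi (x,y))) with (PhiX x y); change (Defs.c2 (Phi (x,y))) with (PhiY x y); change (Defs.c3 (Phi (x,y))) with (PhiZ x y).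
    destruct (reg_B x y (orect_in x y Ho) Hs) as [E1 [E2 E3]]. rewrite E1. unfold tf, LL. lra.
  - apply (smooth_region _ _ 0 0 (-1) 0 0 0 0 0). intros x y [Ho Hs]. cbn [fst snd] in *; change (Defs.c1 (Phi (x,y))) with (PhiX x y); change (Defs.c2 (Phi (x,y))) with (PhiY x y); change (Defs.c3 (Phi (x,y))) with (PhiZ x y).
    destruct (reg_B x y (orect_in x y Ho) Hs) as [E1 [E2 E3]]. rewrite E2. unfold tf. lra.
  - apply (smooth_region _ _ 0 0 0 0 0 0 0 0). intros x y [Ho Hs]. cbn [fst snd] in *; change (Defs.c1 (Phi (x,y))) with (PhiX x y); change (Defs.c2 (Phi (x,y))) with (PhiY x y); change (Defs.c3 (Phi (x,y))) with (PhiZ x y).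
    destruct (reg_B x y (orect_in x y Ho) Hs) as [E1 [E2 E3]]. rewrite E3. unfold tf. lra.
Qed.

Definition convex2 (D : R2 -> Prop) : Prop :=
  forall p q t, D p -> D q -> 0 <= t <= 1 ->
    D ((1-t) * fst p + t * fst q, (1-t) * snd p + t * snd q).

Lemma dist2_lt_sq p q c : 0 < c -> ((fst p - fst q)^2 + (snd p - snd q)^2 < c^2 <-> dist2 p q < c).
Proof. intros Hc. unfold dist2. split; intros H.
  - rewrite <- (sqrt_pow2 c) by lra. apply sqrt_lt_1_alt. split; [|exact H].
    apply Rplus_le_le_0_compat; apply pow2_ge_0.
  - assert (0 <= (fst p - fst q)^2 + (snd p - snd q)^2) by (apply Rplus_le_le_0_compat; apply pow2_ge_0).
    apply sqrt_lt_0_alt. rewrite sqrt_pow2 by lra. exact H. Qed.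

Lemma closure_convex (D : R2 -> Prop) p0 r0 : convex2 D -> 0 < r0 ->
  (forall z, dist2 z p0 < r0 -> D z) -> forall p, D p -> in_closure_of_interior D p.
Proof.
  intros Hcv Hr0 Hb p Hp eps Heps.
  set (d := dist2 p0 p). assert (Hd : 0 <= d) by apply dist2_pos.
  set (t := Rmin (1/2) (eps / (2 * (d + 1)))).
  assert (Ht1 : t <= 1/2) by apply Rmin_l.
  assert (Ht2 : t <= eps / (2 * (d + 1))) by apply Rmin_r.
  assert (Ht0 : 0 < t) by (apply Rmin_pos; [lra| apply Rdiv_lt_0_compat; lra]).
  clearbody t.
  set (q := ((1-t) * fst p + t * fst p0, (1-t) * snd p + t * snd p0)).
  exists q. split.
  - exists (t * r0). split. nra.
    intros z Hz.
    set (w := (fst p0 + (fst z - fst q) / t, snd p0 + (snd z - snd q) / t)).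
    assert (Hw : D w).
    { apply Hb. apply dist2_lt_sq; auto. apply dist2_lt_sq in Hz; [|nra].
      assert (E1 : fst w - fst p0 = (fst z - fst q)/t) by (unfold w; cbn [fst]; ring).
      assert (E2 : snd w - snd p0 = (snd z - snd q)/t) by (unfold w; cbn [snd]; ring).
      rewrite E1, E2. clearbody q w.
      replace (((fst z - fst q) / t) ^ 2 + ((snd z - snd q) / t) ^ 2) with
         (((fst z - fst q) ^ 2 + (snd z - snd q) ^ 2) / t ^ 2) by (field; lra).
      apply (Rmult_lt_reg_l (t^2)). nra.
      replace (t ^ 2 * (((fst z - fst q) ^ 2 + (snd z - snd q) ^ 2) / t ^ 2)) with
        ((fst z - fst q) ^ 2 + (snd z - snd q) ^ 2) by (field; lra).
      replace (t ^ 2 * r0 ^ 2) with ((t * r0)^2) by ring. exact Hz. }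
    pose proof (Hcv p w t Hp Hw ltac:(split; lra)) as Hz'.
    replace z with ((1 - t) * fst p + t * fst w, (1 - t) * snd p + t * snd w). exact Hz'.
    destruct z as [zx zy]. unfold w, q; simpl. f_equal; field; lra.
  - apply dist2_lt_sq; [lra|]. unfold q; cbn [fst snd].
    replace (((1 - t) * fst p + t * fst p0 - fst p) ^ 2 + ((1 - t) * snd p + t * snd p0 - snd p) ^ 2)
      with (t^2 * ((fst p0 - fst p)^2 + (snd p0 - snd p)^2)) by ring.
    assert (Hdd : (fst p0 - fst p) ^ 2 + (snd p0 - snd p) ^ 2 = d^2).
    { unfold d, dist2. rewrite pow2_sqrt. reflexivity. apply Rplus_le_le_0_compat; apply pow2_ge_0. }
    rewrite Hdd. clearbody d q.
    assert (t * d < eps).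
    { apply Rle_lt_trans with (eps / (2 * (d + 1)) * d). apply Rmult_le_compat_r; lra.
      apply (Rmult_lt_reg_r (2 * (d+1))). lra. unfold Rdiv.
      replace (eps * / (2 * (d + 1)) * d * (2 * (d + 1))) with (eps * d) by (field; lra). nra. }
    assert (0 <= t * d) by nra. nra.
Qed.

Lemma conv_le (a b c t : R) : a <= c -> b <= c -> 0 <= t <= 1 -> (1-t)*a + t*b <= c.
Proof. intros H1 H2 [H3 H4]. nra. Qed.
Lemma conv_lt (a b c t : R) : a < c -> b < c -> 0 <= t <= 1 -> (1-t)*a + t*b < c.
Proof. intros H1 H2 [H3 H4].
  assert ((1-t)*(c-a) >= 0) by nra. assert (t*(c-b) >= 0) by nra.
  destruct (Rle_dec t (1/2)). nra. nra. Qed.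
Lemma conv_ge (a b c t : R) : c <= a -> c <= b -> 0 <= t <= 1 -> c <= (1-t)*a + t*b.
Proof. intros H1 H2 [H3 H4]. nra. Qed.
Lemma conv_gt (a b c t : R) : c < a -> c < b -> 0 <= t <= 1 -> c < (1-t)*a + t*b.
Proof. intros H1 H2 [H3 H4].
  assert ((1-t)*(a-c) >= 0) by nra. assert (t*(b-c) >= 0) by nra.
  destruct (Rle_dec t (1/2)). nra. nra. Qed.

Lemma s1_conv x y x' y' t : s1 ((1-t)*x + t*x') ((1-t)*y + t*y') = (1-t) * s1 x y + t * s1 x' y'.
Proof. unfold s1; ring. Qed.
Lemma s2_conv x y x' y' t : s2 ((1-t)*x + t*x') ((1-t)*y + t*y') = (1-t) * s2 x y + t * s2 x' y'.
Proof. unfold s2; ring. Qed.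
Lemma s3_conv x y x' y' t : s3 ((1-t)*x + t*x') ((1-t)*y + t*y') = (1-t) * s3 x y + t * s3 x' y'.
Proof. unfold s3; ring. Qed.

Lemma orect_conv p q t : orect p -> orect q -> 0 <= t <= 1 ->
  orect ((1-t) * fst p + t * fst q, (1-t) * snd p + t * snd q).
Proof. unfold orect, open_rect; simpl. intros [[? ?] [? ?]] [[? ?] [? ?]] Ht.
  repeat split; [apply conv_gt| apply conv_lt | apply conv_gt | apply conv_lt]; auto. Qed.

Ltac conv_tac :=
  intros [px py] [qx qy] t; unfold DA, DC1, DP1, DC2, DP2, DC3, DB; simpl;
  rewrite ?s1_conv, ?s2_conv, ?s3_conv;
  intros Hp Hq Ht;
  repeat match type of Hp with _ /\ _ => destruct Hp as [? Hp] end;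
  repeat match type of Hq with _ /\ _ => destruct Hq as [? Hq] end;
  repeat split;
  first [ apply (orect_conv (px,py) (qx,qy)); assumption
        | apply conv_le; assumption | apply conv_ge; assumption ].

Lemma cvA : convex2 DA. Proof. conv_tac. Qed.
Lemma cvC1 : convex2 DC1. Proof. conv_tac. Qed.
Lemma cvP1 : convex2 DP1. Proof. conv_tac. Qed.
Lemma cvC2 : convex2 DC2. Proof. conv_tac. Qed.
Lemma cvP2 : convex2 DP2. Proof. conv_tac. Qed.
Lemma cvC3 : convex2 DC3. Proof. conv_tac. Qed.
Lemma cvB : convex2 DB. Proof. conv_tac. Qed.

Lemma ball_box z cx cy r : dist2 z (cx, cy) < r -> Rabs (fst z - cx) < r /\ Rabs (snd z - cy) < r.
Proof. intros H. pose proof (fst_le_dist2 z (cx,cy)). pose proof (snd_le_dist2 z (cx,cy)). simpl in *. split; lra. Qed.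

Ltac ball_tac :=
  intros [zx zy] Hz; apply ball_box in Hz; simpl in Hz; destruct Hz as [Hx Hy];
  apply Rabs_def2 in Hx; apply Rabs_def2 in Hy;
  unfold DA, DC1, DP1, DC2, DP2, DC3, DB, orect, open_rect, LL, BB, s1, s2, s3, cc2, r1, r2, r3; simpl;
  pose proof PI_gt3; pose proof PI_le4; repeat split; lra.

Lemma bA : forall z, dist2 z (1/4, 0) < 1/10 -> DA z. Proof. ball_tac. Qed.
Lemma bC1 : forall z, dist2 z (23/16, 0) < 1/20 -> DC1 z. Proof. ball_tac. Qed.
Lemma bP1 : forall z, dist2 z (4, 0) < 1/10 -> DP1 z. Proof. ball_tac. Qed.
Lemma bC2 : forall z, dist2 z (36/5, 0) < 1/20 -> DC2 z. Proof. ball_tac. Qed.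
Lemma bP2 : forall z, dist2 z (9, 0) < 1/10 -> DP2 z. Proof. ball_tac. Qed.
Lemma bC3 : forall z, dist2 z (203/16, 0) < 1/20 -> DC3 z. Proof. ball_tac. Qed.
Lemma bB : forall z, dist2 z (14, 0) < 1/10 -> DB z. Proof. ball_tac. Qed.

Lemma piece_ok (D : R2 -> Prop) c r : (forall p, D p -> orect p) -> convex2 D -> 0 < r ->
  (forall z, dist2 z c < r -> D z) -> smooth_map_on (interior2 D) Phi ->
  (forall p, D p -> open_rect LL BB p) /\ (forall p, D p -> in_closure_of_interior D p) /\
  smooth_map_on (interior2 D) Phi.
Proof. intros H1 H2 H3 H4 H5. split; [exact H1|]. split; [|exact H5].
  intros p Hp. eapply closure_convex; eauto. Qed.

Lemma psmooth : piecewise_smooth_on (open_rect LL BB) Phi.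
Proof.
  exists (DA :: DC1 :: DP1 :: DC2 :: DP2 :: DC3 :: DB :: nil). split.
  - intros [x y] Hp. assert (Hr : inrect x y) by (apply orect_in; exact Hp).
    destruct (regions x y Hr) as [R|[R|[R|[R|[R|[R|R]]]]]].
    + exists DA. split. simpl; auto. split; auto.
    + exists DC1. split. simpl; auto. split; auto. simpl. lra.
    + exists DP1. split. simpl; auto. split; auto.
    + exists DC2. split. simpl; auto 10. split; auto. simpl. lra.
    + exists DP2. split. simpl; auto 10. split; auto.
    + exists DC3. split. simpl; auto 10. split; auto. simpl. lra.
    + exists DB. split. simpl; auto 10. split; auto.
  - intros D HD. simpl in HD.
    destruct HD as [<-|[<-|[<-|[<-|[<-|[<-|[<-|[]]]]]]]].
    + apply (piece_ok DA (1/4,0) (1/10)); [intros p [? ?]; auto| exact cvA | lra | exact bA | exact smA].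
    + apply (piece_ok DC1 (23/16,0) (1/20)); [intros p [? ?]; auto| exact cvC1 | lra | exact bC1 | exact smC1].
    + apply (piece_ok DP1 (4,0) (1/10)); [intros p [? ?]; auto| exact cvP1 | lra | exact bP1 | exact smP1].
    + apply (piece_ok DC2 (36/5,0) (1/20)); [intros p [? ?]; auto| exact cvC2 | lra | exact bC2 | exact smC2].
    + apply (piece_ok DP2 (9,0) (1/10)); [intros p [? ?]; auto| exact cvP2 | lra | exact bP2 | exact smP2].
    + apply (piece_ok DC3 (203/16,0) (1/20)); [intros p [? ?]; auto| exact cvC3 | lra | exact bC3 | exact smC3].
    + apply (piece_ok DB (14,0) (1/10)); [intros p [? ?]; auto| exact cvB | lra | exact bB | exact smB].
Qed.

Definition EE (i : nat) (p : R2) : Prop :=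
  rect LL BB p /\
  match i with
  | 0%nat => s1 (fst p) (snd p) <= 0 \/ PI * r3 <= s3 (fst p) (snd p)
  | 1%nat => PI * r1 <= s1 (fst p) (snd p) /\ s2 (fst p) (snd p) <= 0
  | 2%nat => PI * r2 <= s2 (fst p) (snd p) /\ s3 (fst p) (snd p) <= 0
  | 3%nat => 0 <= s1 (fst p) (snd p) <= PI * r1
  | 4%nat => 0 <= s2 (fst p) (snd p) <= PI * r2
  | 5%nat => 0 <= s3 (fst p) (snd p) <= PI * r3
  | _ => False
  end.

Definition nn (i : nat) : R3 := ((0, 0), 1).
Definition ccc (i : nat) : R := match i with 0%nat => 0 | 1%nat => 1/5 | _ => -1/5 end.
Definition K3 : R := 38/25 - PI/10.
Definition aa (i : nat) : R3 := match i with
  | 0%nat => ((4/5, -3/5), 1/10)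
  | 1%nat => ((0, 27/5 - PI/10), 0)
  | _ => ((-4/5 * K3, -3/5 * K3), -1/10) end.
Definition uu (i : nat) : R3 := match i with
  | 0%nat => ((3/5, 4/5), 0)
  | 1%nat => ((1, 0), 0)
  | _ => ((3/5, -4/5), 0) end.
Definition rr (i : nat) : R := match i with 0%nat => 1/10 | 1%nat => 1/5 | _ => 1/10 end.

Lemma EE_cover p : rect LL BB p -> exists i, (i < 6)%nat /\ EE i p.
Proof. intros Hp. destruct p as [x y]. pose proof (rect_in x y Hp) as Hr.
  destruct (regions x y Hr) as [R|[R|[R|[R|[R|[R|R]]]]]].
  - exists 0%nat. split. lia. split; auto.
  - exists 3%nat. split. lia. split; auto. simpl. lra.
  - exists 1%nat. split. lia. split; auto.
  - exists 4%nat. split. lia. split; auto. simpl. lra.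
  - exists 2%nat. split. lia. split; auto.
  - exists 5%nat. split. lia. split; auto. simpl. lra.
  - exists 0%nat. split. lia. split; auto.
Qed.

Ltac ballE :=
  intros [zx zy] Hz; apply ball_box in Hz; simpl in Hz; destruct Hz as [Hx Hy];
  apply Rabs_def2 in Hx; apply Rabs_def2 in Hy;
  unfold EE, rect, LL, BB, s1, s2, s3, cc2, r1, r2, r3; simpl;
  pose proof PI_gt3; pose proof PI_le4; repeat split; try lra.

Lemma EE_int i : (i < 6)%nat -> nonempty_interior (EE i).
Proof. intros Hi.
  destruct i as [|[|[|[|[|[|i]]]]]].
  - exists (1/4, 0). exists (1/10). split. lra. ballE. all: try (left; lra).
  - exists (4, 0). exists (1/10). split. lra. ballE.
  - exists (9, 0). exists (1/10). split. lra. ballE.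
  - exists (23/16, 0). exists (1/20). split. lra. ballE.
  - exists (36/5, 0). exists (1/20). split. lra. ballE.
  - exists (203/16, 0). exists (1/20). split. lra. ballE.
  - lia.
Qed.

Lemma int_shift (D : R2 -> Prop) p : interior2 D p -> exists e, 0 < e /\
  forall a b, Rabs a <= 1 -> Rabs b <= 1 -> D (fst p + e * a, snd p + e * b).
Proof. intros [r [Hr H]]. exists (r/3). split. lra. intros a b Ha Hb. apply H.
  eapply Rle_lt_trans. apply dist2_le_sum. simpl.
  replace (fst p + r / 3 * a - fst p) with (r/3 * a) by ring.
  replace (snd p + r / 3 * b - snd p) with (r/3 * b) by ring.
  rewrite !Rabs_mult. rewrite (Rabs_right (r/3)) by lra. nra. Qed.

Lemma scale_abs k a : 0 <= k <= 1 -> Rabs a <= 1 -> Rabs (k * a) <= 1.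
Proof. intros [H1 H2] H. rewrite Rabs_mult, Rabs_right by lra. pose proof (Rabs_pos a). nra. Qed.

Lemma EE_disj i j : (i < j < 6)%nat -> forall p, interior2 (EE i) p -> interior2 (EE j) p -> False.
Proof.
  intros Hij p Hi Hj.
  destruct (int_shift _ _ Hi) as [e1 [He1 H1]]. destruct (int_shift _ _ Hj) as [e2 [He2 H2]].
  set (e := Rmin e1 e2). assert (He : 0 < e) by (apply Rmin_pos; lra).
  assert (Hm1 : e <= e1) by apply Rmin_l. assert (Hm2 : e <= e2) by apply Rmin_r.
  assert (G1 : forall a b, Rabs a <= 1 -> Rabs b <= 1 -> EE i (fst p + e * a, snd p + e * b)).
  { intros a b Ha Hb. replace (e * a) with (e1 * (e/e1 * a)) by (field; lra).
    replace (e * b) with (e1 * (e/e1 * b)) by (field; lra).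
    assert (0 <= e/e1 <= 1) by (split; [apply Rmult_le_pos; [lra| apply Rlt_le, Rinv_0_lt_compat; lra]|
       apply (Rmult_le_reg_r e1); auto; unfold Rdiv; rewrite Rmult_assoc, Rinv_l; lra]).
    apply H1; apply scale_abs; auto. }
  assert (G2 : forall a b, Rabs a <= 1 -> Rabs b <= 1 -> EE j (fst p + e * a, snd p + e * b)).
  { intros a b Ha Hb. replace (e * a) with (e2 * (e/e2 * a)) by (field; lra).
    replace (e * b) with (e2 * (e/e2 * b)) by (field; lra).
    assert (0 <= e/e2 <= 1) by (split; [apply Rmult_le_pos; [lra| apply Rlt_le, Rinv_0_lt_compat; lra]|
       apply (Rmult_le_reg_r e2); auto; unfold Rdiv; rewrite Rmult_assoc, Rinv_l; lra]).
    apply H2; apply scale_abs; auto. }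
  assert (A0 : Rabs 0 <= 1) by (rewrite Rabs_R0; lra).
  assert (A1 : Rabs (4/5) <= 1) by (rewrite Rabs_right; lra).
  assert (A2 : Rabs (-3/5) <= 1) by (rewrite Rabs_left; lra).
  assert (A3 : Rabs (-4/5) <= 1) by (rewrite Rabs_left; lra).
  assert (A4 : Rabs (3/5) <= 1) by (rewrite Rabs_right; lra).
  assert (A5 : Rabs (24/25) <= 1) by (rewrite Rabs_right; lra).
  assert (A6 : Rabs (7/25) <= 1) by (rewrite Rabs_right; lra).
  assert (A7 : Rabs (-24/25) <= 1) by (rewrite Rabs_left; lra).
  assert (A8 : Rabs (-7/25) <= 1) by (rewrite Rabs_left; lra).
  pose proof (G1 0 0 A0 A0) as P0. pose proof (G2 0 0 A0 A0) as Q0.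
  pose proof (G1 _ _ A1 A2) as P1. pose proof (G2 _ _ A1 A2) as Q1.
  pose proof (G1 _ _ A3 A4) as P2. pose proof (G2 _ _ A3 A4) as Q2.
  pose proof (G1 _ _ A5 A6) as P3. pose proof (G2 _ _ A5 A6) as Q3.
  pose proof (G1 _ _ A7 A8) as P4. pose proof (G2 _ _ A7 A8) as Q4.
  clear G1 G2 H1 H2 Hi Hj A0 A1 A2 A3 A4 A5 A6 A7 A8.
  clearbody e. destruct p as [px py]. simpl in *.
  pose proof PI_gt3; pose proof PI_le4.
  destruct i as [|[|[|[|[|[|i]]]]]]; destruct j as [|[|[|[|[|[|j]]]]]]; try lia;
  unfold EE, rect, LL, BB, s1, s2, s3, cc2, r1, r2, r3 in *; simpl in *;
  repeat match goal with H : _ /\ _ |- _ => destruct H end;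
  repeat match goal with H : _ \/ _ |- _ => destruct H end; lra.
Qed.

Lemma sc2 t : sin t ^ 2 + cos t ^ 2 = 1.
Proof. rewrite <- !Rsqr_pow2. apply sin2_cos2. Qed.

Lemma EE_planes i : (i < 3)%nat -> nn i <> zero3 /\ (forall p, EE i p -> plane (nn i) (ccc i) (Phi p)).
Proof. intros Hi. split.
  - unfold nn, zero3. intros H. inversion H. lra.
  - intros [x y] [Hr Hp]. pose proof (rect_in x y Hr) as Hr'. simpl in Hp.
    unfold plane, dot3, nn, Defs.c1, Defs.c2, Defs.c3, Phi; cbn [fst snd].
    destruct i as [|[|[|i]]]; try lia; simpl ccc.
    + destruct Hp as [Hp|Hp].
      * destruct (reg_A x y Hr' Hp) as [_ [_ Z]]. rewrite Z. ring.
      * destruct (reg_B x y Hr' Hp) as [_ [_ Z]]. rewrite Z. ring.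
    + destruct Hp as [Hp1 Hp2]. destruct (reg_P1 x y Hr' Hp1 Hp2) as [_ [_ Z]]. rewrite Z. unfold r1. field.
    + destruct Hp as [Hp1 Hp2]. destruct (reg_P2 x y Hr' Hp1 Hp2) as [_ [_ Z]]. rewrite Z. unfold r1, r2. field.
Qed.

Lemma EE_cyls i : (i < 3)%nat -> uu i <> zero3 /\ 0 < rr i /\
  (forall p, EE (3 + i) p -> cylinder (aa i) (uu i) (rr i) (Phi p)).
Proof. intros Hi. destruct i as [|[|[|i]]]; try lia.
  - split. unfold uu, zero3. intros H; inversion H; lra. split. unfold rr; lra.
    intros [x y] [Hr Hp]. pose proof (rect_in x y Hr) as Hr'. simpl in Hp.
    destruct (reg_C1 x y Hr' Hp) as [X [Y Z]].
    unfold cylinder, dot3, sub3, aa, uu, rr, Defs.c1, Defs.c2, Defs.c3, Phi; cbn [fst snd].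
    rewrite X, Y, Z. pose proof (sc2 (s1 x y / r1)) as SC.
    set (S := sin (s1 x y / r1)) in *. set (C := cos (s1 x y / r1)) in *. clearbody S C.
    unfold s1, r1. unfold s1, r1 in SC.
    transitivity ((1/10)^2 * (S^2 + C^2)). field. rewrite SC. ring.
  - split. unfold uu, zero3. intros H; inversion H; lra. split. unfold rr; lra.
    intros [x y] [Hr Hp]. pose proof (rect_in x y Hr) as Hr'. simpl in Hp.
    destruct (reg_C2 x y Hr' Hp) as [X [Y Z]].
    unfold cylinder, dot3, sub3, aa, uu, rr, Defs.c1, Defs.c2, Defs.c3, Phi; cbn [fst snd].
    rewrite X, Y, Z. pose proof (sc2 (s2 x y / r2)) as SC.
    set (S := sin (s2 x y / r2)) in *. set (C := cos (s2 x y / r2)) in *. clearbody S C.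
    unfold s1, s2, cc2, r1, r2. unfold s2, cc2, r2 in SC.
    transitivity ((1/5)^2 * (S^2 + C^2)). field. rewrite SC. ring.
  - split. unfold uu, zero3. intros H; inversion H; lra. split. unfold rr; lra.
    intros [x y] [Hr Hp]. pose proof (rect_in x y Hr) as Hr'. simpl in Hp.
    destruct (reg_C3 x y Hr' Hp) as [X [Y Z]].
    unfold cylinder, dot3, sub3, aa, uu, rr, Defs.c1, Defs.c2, Defs.c3, Phi; cbn [fst snd].
    rewrite X, Y, Z. pose proof (sc2 (s3 x y / r3)) as SC.
    set (S := sin (s3 x y / r3)) in *. set (C := cos (s3 x y / r3)) in *. clearbody S C.
    unfold s1, s2, s3, cc2, r1, r2, r3, K3. unfold s3, r3 in SC.
    transitivity ((1/10)^2 * (S^2 + C^2)). field. rewrite SC. ring.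
Qed.

Lemma planes_distinct i j : (i < j < 3)%nat -> ~ same_set (plane (nn i) (ccc i)) (plane (nn j) (ccc j)).
Proof. intros Hij Hs. specialize (Hs ((0,0), ccc i)).
  unfold plane, dot3, nn, Defs.c1, Defs.c2, Defs.c3 in Hs; cbn [fst snd] in Hs.
  assert (H : 0 * 0 + 0 * 0 + 1 * ccc i = ccc i) by ring. apply Hs in H.
  destruct i as [|[|[|i]]]; destruct j as [|[|[|j]]]; try lia; simpl in H; lra.
Qed.

Lemma cyls_distinct i j : (i < j < 3)%nat ->
  ~ same_set (cylinder (aa i) (uu i) (rr i)) (cylinder (aa j) (uu j) (rr j)).
Proof. intros Hij Hs.
  set (P := ((Defs.c1 (aa i), Defs.c2 (aa i)), Defs.c3 (aa i) + rr i)).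
  assert (Hi : cylinder (aa i) (uu i) (rr i) P).
  { unfold P. destruct i as [|[|[|i]]]; try lia;
    unfold cylinder, dot3, sub3, aa, uu, rr, Defs.c1, Defs.c2, Defs.c3; cbn [fst snd]; field. }
  apply Hs in Hi. unfold P in Hi. clear P. pose proof PI_gt3. pose proof PI_le4.
  destruct i as [|[|[|i]]]; destruct j as [|[|[|j]]]; try lia;
  unfold cylinder, dot3, sub3, aa, uu, rr, K3, Defs.c1, Defs.c2, Defs.c3 in Hi; cbn [fst snd] in Hi.
  -
    assert (E : (4/5 - 0) * (4/5 - 0) + (-3/5 - (27/5 - PI/10)) * (-3/5 - (27/5 - PI/10)) + (1/10 + 1/10 - 0) * (1/10 + 1/10 - 0) -
      ((4/5 - 0) * 1 + (-3/5 - (27/5 - PI/10)) * 0 + (1/10 + 1/10 - 0) * 0) ^ 2 / (1 * 1 + 0 * 0 + 0 * 0)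
      = (PI/10 - 6)^2 + 1/25) by field.
    rewrite E in Hi. nra.
  -
    assert (HK : 1 < 38 / 25 - PI / 10) by lra. set (K := 38 / 25 - PI / 10) in *. clearbody K.
    assert (E : (4/5 - -4/5 * K) * (4/5 - -4/5 * K) + (-3/5 - -3/5 * K) * (-3/5 - -3/5 * K) + (1/10 + 1/10 - -1/10) * (1/10 + 1/10 - -1/10) -
      ((4/5 - -4/5 * K) * (3/5) + (-3/5 - -3/5 * K) * (-4/5) + (1/10 + 1/10 - -1/10) * 0) ^ 2 /
      (3/5 * (3/5) + -4/5 * (-4/5) + 0 * 0) = 16/25 * (1+K)^2 + 9/25 * (K-1)^2 + 9/100 - (24/25)^2) by field.
    rewrite E in Hi. nra.
  -
    assert (HK : 1 < 38 / 25 - PI / 10) by lra. assert (HM : 4 < 27 / 5 - PI / 10) by lra.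
    set (K := 38 / 25 - PI / 10) in *. set (M := 27 / 5 - PI / 10) in *. clearbody K M.
    assert (E : (0 - -4/5 * K) * (0 - -4/5 * K) + (M - -3/5 * K) * (M - -3/5 * K) + (0 + 1/5 - -1/10) * (0 + 1/5 - -1/10) -
      ((0 - -4/5 * K) * (3/5) + (M - -3/5 * K) * (-4/5) + (0 + 1/5 - -1/10) * 0) ^ 2 /
      (3/5 * (3/5) + -4/5 * (-4/5) + 0 * 0) = (K + 3/5 * M)^2 + 9/100) by field.
    rewrite E in Hi. nra.
Qed.

Lemma dist3_Phi p q : dist3 (Phi q) (Phi p) = L3 (fst p) (snd p) (fst q) (snd q).
Proof. unfold dist3, L3, dot3, sub3, Phi, Defs.c1, Defs.c2, Defs.c3; cbn [fst snd]. f_equal. ring. Qed.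
Lemma dist2_L2 p q : dist2 q p = L2 (fst p) (snd p) (fst q) (snd q).
Proof. unfold dist2, L2. reflexivity. Qed.

Lemma compat : mobius_compatible LL BB Phi.
Proof. intros t Ht. unfold BB in Ht.
  assert (H1 : inrect 0 t) by (unfold inrect, LL; split; lra).
  assert (H2 : inrect LL (-t)) by (unfold inrect, LL; split; lra).
  destruct (reg_A 0 t H1) as [X1 [Y1 Z1]]. { unfold s1. lra. }
  destruct (reg_B LL (-t) H2) as [X2 [Y2 Z2]]. { unfold s3, LL, r3. pose proof PI_le4. lra. }
  unfold Phi; cbn [fst snd]. rewrite X1, Y1, Z1, X2, Y2, Z2. f_equal. f_equal; ring.
Qed.

Lemma contin : continuous_on_set (rect LL BB) Phi.
Proof. intros p Hp eps Heps. exists eps. split; auto. intros q Hq Hd.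
  rewrite dist3_Phi. rewrite dist2_L2 in Hd.
  destruct p as [px py]; destruct q as [qx qy]. simpl in *.
  eapply Rle_lt_trans. apply lipA; apply rect_in; auto. exact Hd. Qed.

Lemma injec : mobius_injective LL BB Phi.
Proof. intros [x y] [x' y'] Hp Hq E. unfold Phi in E; cbn [fst snd] in E.
  injection E as EX EY EZ.
  destruct (Phi_inj x y x' y' (rect_in _ _ Hp) (rect_in _ _ Hq) EX EY EZ) as [[-> ->]|[[? [? ?]]|[? [? ?]]]].
  - left. reflexivity.
  - right; left. simpl. auto.
  - right; right. simpl. auto.
Qed.

Lemma lenpres : length_preserving_on (open_rect LL BB) Phi.
Proof. apply (lp_generic Phi (open_rect LL BB) 116). lra.
  - intros p q Hp Hq. rewrite (dist3_Phi q p).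
    rewrite (dist2_L2 q p). destruct p as [px py]; destruct q as [qx qy]; simpl.
    apply lipA; apply orect_in; auto.
  - intros p q Hp Hq. rewrite (dist3_Phi q p). rewrite (dist2_L2 q p).
    destruct p as [px py]; destruct q as [qx qy]; simpl.
    apply lipB; apply orect_in; auto.
Qed.

Lemma tptc : three_planes_three_cylinders LL BB Phi.
Proof.
  exists EE, nn, ccc, aa, uu, rr. split; [|split; [|split; [|split; [|split; [|split]]]]].
  - apply EE_cover.
  - intros i Hi. split. intros p [Hp _]; exact Hp. apply EE_int; auto.
  - apply EE_disj.
  - apply EE_planes.
  - apply EE_cyls.
  - apply planes_distinct.
  - apply cyls_distinct.
Qed.

Theorem mainTheorem1 :
  exists (l b : R) (Phi : R2 -> R3),
    0 < l /\ 0 < b /\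
    mobius_compatible l b Phi /\
    continuous_on_set (rect l b) Phi /\
    mobius_injective l b Phi /\
    piecewise_smooth_on (open_rect l b) Phi /\
    length_preserving_on (open_rect l b) Phi /\
    three_planes_three_cylinders l b Phi.
Proof.
  exists LL, BB, Phi. unfold LL, BB at 1 2. split. lra. split. lra.
  split. apply compat. split. apply contin. split. apply injec. split. apply psmooth.
  split. apply lenpres. apply tptc.
Qed.
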